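(* Let $K:\mathbb{R}\to\mathbb{R}$ be the Gaussian kernel $K(t)=\exp(-t^2)$. Let $d\ge 1$ be an integer. For every continuous $f:[0,1]^d\to\mathbb{R}$ and every $\varepsilon>0$ there exist positive integers $G,G'$, real weights $w_{pqm}, w_{qm'}$, real centroids $c_{pqm},c_{qm'}$ and positive smoothness parameters $\sigma_{pqm},\sigma_{qm'}$ (for $1\le p\le d$, $1\le q\le 2d+1$, $1\le m\le G$, $1\le m'\le G'$) such that the two-layer RBF-KAN network $$g(x_1,\dots,x_d)=\sum_{q=1}^{2d+1}\sum_{m'=1}^{G'} w_{qm'}\,K\!\left(\frac{y_q(x)-c_{qm'}}{\sigma_{qm'}}\right),\qquad y_q(x)=\sum_{p=1}^{d}\sum_{m=1}^{G} w_{pqm}\,K\!\left(\frac{x_p-c_{pqm}}{\sigma_{pqm}}\right),$$ satisfies $\sup_{x\in[0,1]^d}|f(x)-g(x)|<\varepsilon$.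
   Context: An RBF-KAN network is a Kolmogorov–Arnold-type network in which every univariate component function is a finite linear combination of radial basis functions $t\mapsto w\,K((t-c)/\sigma)$ with weight $w$, centroid $c$ and smoothness parameter $\sigma>0$; here $K$ is the Gaussian kernel. *)

(* Defs.v *)
From Stdlib Require Import Reals.
Open Scope R_scope.

Definition K (t : R) : R := exp (- (t * t)).

Fixpoint rsum (n : nat) (F : nat -> R) : R :=
  match n with
  | O => 0
  | S k => rsum k F + F k
  end.

(* Points of R^d are functions nat -> R; only coordinates 0..d-1 matter. *)
Definition in_cube (d : nat) (x : nat -> R) : Prop :=
  forall p, (p < d)%nat -> 0 <= x p <= 1.

Definition cont_on_cube (d : nat) (f : (nat -> R) -> R) : Prop :=
  forall x, in_cube d x -> forall eps, 0 < eps -> exists delta, 0 < delta /\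
    forall y, in_cube d y -> (forall p, (p < d)%nat -> Rabs (y p - x p) < delta) ->
      Rabs (f y - f x) < eps.

Definition depends_on_first (d : nat) (f : (nat -> R) -> R) : Prop :=
  forall x y, (forall p, (p < d)%nat -> x p = y p) -> f x = f y.

(* Inner function y_q(x) (0-based indices: p < d, m < G). *)
Definition inner (d G : nat) (w c s : nat -> nat -> nat -> R) (q : nat) (x : nat -> R) : R :=
  rsum d (fun p => rsum G (fun m => w p q m * K ((x p - c p q m) / s p q m))).

Definition rbf_kan (d G G' : nat) (w c s : nat -> nat -> nat -> R)
  (w' c' s' : nat -> nat -> R) (x : nat -> R) : R :=
  rsum (2 * d + 1) (fun q => rsum G' (fun m' =>
    w' q m' * K ((inner d G w c s q x - c' q m') / s' q m'))).

(* Main.v *)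
Require Import Defs.
From Stdlib Require Import Reals Lra Lia Psatz ZArith List ClassicalEpsilon Classical FunctionalExtensionality.
Open Scope R_scope.


Lemma rsum_ext : forall n F G, (forall k, (k < n)%nat -> F k = G k) -> rsum n F = rsum n G.
Proof. induction n; intros; simpl; auto. rewrite IHn with (G:=G) by (intros; apply H; lia). rewrite H by lia. reflexivity. Qed.

Lemma rsum_plus : forall n F G, rsum n (fun k => F k + G k) = rsum n F + rsum n G.
Proof. induction n; intros; simpl; [lra|]. rewrite IHn. lra. Qed.

Lemma rsum_minus : forall n F G, rsum n (fun k => F k - G k) = rsum n F - rsum n G.
Proof. induction n; intros; simpl; [lra|]. rewrite IHn. lra. Qed.

Lemma rsum_scal : forall n c F, rsum n (fun k => c * F k) = c * rsum n F.
Proof. induction n; intros; simpl; [lra|]. rewrite IHn. lra. Qed.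

Lemma rsum_const : forall n c, rsum n (fun _ => c) = INR n * c.
Proof. induction n; intros; simpl rsum; [simpl; lra|]. rewrite IHn, S_INR. lra. Qed.

Lemma rsum_le : forall n F G, (forall k, (k < n)%nat -> F k <= G k) -> rsum n F <= rsum n G.
Proof. induction n; intros; simpl; [lra|]. assert (F n <= G n) by (apply H; lia).
 assert (rsum n F <= rsum n G) by (apply IHn; intros; apply H; lia). lra. Qed.

Lemma rsum_abs : forall n F, Rabs (rsum n F) <= rsum n (fun k => Rabs (F k)).
Proof. induction n; intros; simpl. rewrite Rabs_R0; lra.
 eapply Rle_trans. apply Rabs_triang. specialize (IHn F). lra. Qed.

Lemma rsum_nonneg : forall n F, (forall k, (k < n)%nat -> 0 <= F k) -> 0 <= rsum n F.
Proof. intros. replace 0 with (rsum n (fun _ => 0)). apply rsum_le; auto.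
 rewrite rsum_const; lra. Qed.

Lemma rsum_split : forall m n F, rsum (m + n) F = rsum m F + rsum n (fun k => F (m + k)%nat).
Proof. intros m n; revert m; induction n; intros.
 - rewrite Nat.add_0_r; simpl; lra.
 - rewrite Nat.add_succ_r. simpl. rewrite IHn. lra. Qed.

Lemma rsum_shift : forall n F, rsum (S n) F = F O + rsum n (fun k => F (S k)).
Proof. intros. replace (S n) with (1 + n)%nat by lia. rewrite rsum_split. simpl. lra. Qed.

Lemma rsum_zero_tail : forall m n F, (m <= n)%nat -> (forall k, (m <= k < n)%nat -> F k = 0) ->
  rsum n F = rsum m F.
Proof. intros. replace n with (m + (n - m))%nat by lia. rewrite rsum_split.
 rewrite (rsum_ext (n - m) _ (fun _ => 0)). rewrite rsum_const. ring.
 intros. apply H0. lia. Qed.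

Lemma rsum_telescope : forall n v, rsum n (fun k => v (S k) - v k) = v n - v O.
Proof. induction n; intros; simpl; [lra|]. rewrite IHn. lra. Qed.

Lemma rsum_single : forall n F i, (i < n)%nat -> (forall k, (k < n)%nat -> k <> i -> F k = 0) ->
  rsum n F = F i.
Proof. induction n; intros. lia. simpl. destruct (Nat.eq_dec i n).
 - subst i. rewrite (rsum_ext n _ (fun _ => 0)). rewrite rsum_const. lra.
   intros; apply H0; lia.
 - rewrite (IHn F i). rewrite (H0 n) by lia. lra. lia. intros; apply H0; lia. Qed.

Lemma rsum_atmost1 : forall n F C, (forall k, (k < n)%nat -> Rabs (F k) <= C) ->
  (forall i j, (i < n)%nat -> (j < n)%nat -> F i <> 0 -> F j <> 0 -> i = j) -> 0 <= C ->
  Rabs (rsum n F) <= C.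
Proof. induction n; intros; simpl. rewrite Rabs_R0; lra.
 destruct (Req_dec (F n) 0).
 - rewrite H2, Rplus_0_r. apply IHn; [intros; apply H; lia | intros; apply H0; auto; lia | auto].
 - rewrite (rsum_ext _ _ (fun _ => 0)). rewrite rsum_const. rewrite Rmult_0_r, Rplus_0_l. apply H; lia.
   intros. destruct (Req_dec (F k) 0); auto. exfalso. assert (k = n) by (apply H0; auto; lia). lia. Qed.

Lemma rsum_comm : forall n m (F : nat -> nat -> R),
  rsum n (fun i => rsum m (fun j => F i j)) = rsum m (fun j => rsum n (fun i => F i j)).
Proof. induction n; intros; simpl. rewrite rsum_const; lra.
 rewrite IHn. rewrite <- rsum_plus. reflexivity. Qed.

Definition clamp (u : R) : R := Rmin 1 (Rmax 0 u).

Lemma clamp_range : forall u, 0 <= clamp u <= 1.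
Proof. intros; unfold clamp, Rmin, Rmax; repeat destruct Rle_dec; lra. Qed.
Lemma clamp_1 : forall u, 1 <= u -> clamp u = 1.
Proof. intros; unfold clamp, Rmin, Rmax; repeat destruct Rle_dec; lra. Qed.
Lemma clamp_0 : forall u, u <= 0 -> clamp u = 0.
Proof. intros; unfold clamp, Rmin, Rmax; repeat destruct Rle_dec; lra. Qed.
Lemma clamp_lip : forall u v, Rabs (clamp u - clamp v) <= Rabs (u - v).
Proof. intros; unfold clamp, Rmin, Rmax; repeat destruct Rle_dec;
 unfold Rabs; repeat destruct Rcase_abs; lra. Qed.

Definition Lip (L : R) (g : R -> R) : Prop := forall a b, Rabs (g a - g b) <= L * Rabs (a - b).

Lemma Lip_const : forall c, Lip 0 (fun _ => c).
Proof. intros c a b. replace (c - c) with 0 by lra. rewrite Rabs_R0. 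
 assert (0 <= Rabs (a-b)) by apply Rabs_pos. nra. Qed.

Lemma Lip_plus : forall L1 L2 g1 g2, Lip L1 g1 -> Lip L2 g2 -> Lip (L1 + L2) (fun t => g1 t + g2 t).
Proof. intros L1 L2 g1 g2 H1 H2 a b. specialize (H1 a b); specialize (H2 a b).
 replace (g1 a + g2 a - (g1 b + g2 b)) with ((g1 a - g1 b) + (g2 a - g2 b)) by ring.
 eapply Rle_trans. apply Rabs_triang. lra. Qed.

Lemma Lip_mono : forall L1 L2 g, Lip L1 g -> L1 <= L2 -> Lip L2 g.
Proof. intros L1 L2 g H Hl a b. specialize (H a b). assert (0 <= Rabs (a-b)) by apply Rabs_pos. nra. Qed.

Lemma Lip_scal : forall L c g, Lip L g -> Lip (Rabs c * L) (fun t => c * g t).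
Proof. intros L c g H a b. rewrite <- Rmult_minus_distr_l, Rabs_mult. rewrite Rmult_assoc.
 apply Rmult_le_compat_l. apply Rabs_pos. apply H. Qed.

Lemma Lip_affine : forall L g al be, Lip L g -> Lip (L * Rabs al) (fun t => g (al * t + be)).
Proof. intros L g al be H a b. eapply Rle_trans. apply H.
 replace (al * a + be - (al * b + be)) with (al * (a - b)) by ring. rewrite Rabs_mult. lra. Qed.

Lemma Lip_rsum : forall n L (g : nat -> R -> R), (forall k, (k < n)%nat -> Lip L (g k)) ->
  Lip (INR n * L) (fun t => rsum n (fun k => g k t)).
Proof. induction n; intros L g H a b; simpl rsum.
 replace (0 - 0) with 0 by ring. rewrite Rabs_R0. simpl. assert (0 <= Rabs (a-b)) by apply Rabs_pos. lra.
 rewrite S_INR. replace (rsum n (fun k => g k a) + g n a - (rsum n (fun k => g k b) + g n b)) with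
   ((rsum n (fun k => g k a) - rsum n (fun k => g k b)) + (g n a - g n b)) by ring.
 eapply Rle_trans. apply Rabs_triang.
 assert (Rabs (rsum n (fun k => g k a) - rsum n (fun k => g k b)) <= INR n * L * Rabs (a - b)).
 { apply (IHn L g). intros; apply H; lia. }
 assert (Rabs (g n a - g n b) <= L * Rabs (a-b)) by (apply H; lia). lra. Qed.

Lemma Lip_clamp : Lip 1 clamp.
Proof. intros a b. rewrite Rmult_1_l. apply clamp_lip. Qed.

Lemma Lip_comp : forall L1 L2 g1 g2, Lip L1 g1 -> Lip L2 g2 -> 0 <= L1 -> Lip (L1 * L2) (fun t => g1 (g2 t)).
Proof. intros L1 L2 g1 g2 H1 H2 HL a b. eapply Rle_trans. apply H1.
 rewrite Rmult_assoc. apply Rmult_le_compat_l; auto. Qed.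

Lemma Lip_nonneg : forall L g (a b : R), Lip L g -> a <> b -> 0 <= L.
Proof. intros. specialize (H a b). assert (0 < Rabs (a - b)) by (apply Rabs_pos_lt; intro; apply H0; lra).
 assert (0 <= Rabs (g a - g b)) by apply Rabs_pos.
 destruct (Rle_dec 0 L); auto. nra. Qed.

Lemma Rdiv_le_0_compat : forall a b, 0 <= a -> 0 < b -> 0 <= a / b.
Proof. intros. unfold Rdiv. apply Rmult_le_pos; auto. left; apply Rinv_0_lt_compat; auto. Qed.


Fixpoint bw (n k : nat) (y : R) : R :=
  match n with
  | O => match k with O => 1 | S _ => 0 end
  | S n' => y * (match k with O => 0 | S k' => bw n' k' y end) + (1 - y) * bw n' k y
  end.

Lemma bw_zero : forall n k y, (n < k)%nat -> bw n k y = 0.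
Proof. induction n; intros; simpl. destruct k; [lia|auto].
 destruct k; [lia|]. rewrite IHn by lia. rewrite IHn by lia. ring. Qed.

Lemma bw_nonneg : forall n k y, 0 <= y <= 1 -> 0 <= bw n k y.
Proof. induction n; intros; simpl. destruct k; lra.
 destruct k. specialize (IHn O y H). nra. specialize (IHn k y H) as H1. specialize (IHn (S k) y H). nra. Qed.

Lemma bw_shift : forall n F y,
  rsum (S (S n)) (fun k => F k * bw (S n) k y) =
  y * rsum (S n) (fun k => F (S k) * bw n k y) + (1 - y) * rsum (S n) (fun k => F k * bw n k y).
Proof. intros. rewrite rsum_shift. simpl bw at 1.
 rewrite (rsum_ext _ (fun k => F (S k) * bw (S n) (S k) y)
   (fun k => y * (F (S k) * bw n k y) + (1 - y) * (F (S k) * bw n (S k) y))).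
 2:{ intros. simpl. ring. }
 rewrite rsum_plus, !rsum_scal.
 rewrite (rsum_shift n (fun k => F k * bw n k y)).
 assert (rsum (S n) (fun k => F (S k) * bw n (S k) y) = rsum n (fun k => F (S k) * bw n (S k) y)).
 { simpl. rewrite (bw_zero n (S n)) by lia. ring. }
 rewrite H. ring. Qed.

Lemma bw_M0 : forall n y, rsum (S n) (fun k => bw n k y) = 1.
Proof. induction n; intros. simpl. ring.
 rewrite (rsum_ext _ _ (fun k => 1 * bw (S n) k y)) by (intros; ring).
 rewrite bw_shift. rewrite !(rsum_ext _ (fun k => 1 * bw n k y) (fun k => bw n k y)) by (intros; ring).
 rewrite IHn. ring. Qed.

Lemma bw_M1 : forall n y, rsum (S n) (fun k => INR k * bw n k y) = INR n * y.
Proof. induction n; intros. simpl. ring.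
 rewrite bw_shift. rewrite (rsum_ext _ (fun k => INR (S k) * bw n k y) (fun k => INR k * bw n k y + bw n k y))
   by (intros; rewrite S_INR; ring).
 rewrite rsum_plus, IHn, bw_M0, S_INR. ring. Qed.

Lemma bw_M2 : forall n y, rsum (S n) (fun k => INR k * INR k * bw n k y) = INR n * y + INR n * (INR n - 1) * y * y.
Proof. induction n; intros. simpl. ring.
 rewrite bw_shift. rewrite (rsum_ext _ (fun k => INR (S k) * INR (S k) * bw n k y)
    (fun k => INR k * INR k * bw n k y + (2 * (INR k * bw n k y) + bw n k y)))
   by (intros; rewrite S_INR; ring).
 rewrite rsum_plus, rsum_plus, rsum_scal, IHn, bw_M1, bw_M0, S_INR. ring. Qed.

Lemma bw_var : forall n y, (1 <= n)%nat ->
  rsum (S n) (fun k => (y - INR k / INR n) * (y - INR k / INR n) * bw n k y) = y * (1 - y) / INR n.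
Proof. intros. assert (0 < INR n) by (apply lt_0_INR; lia).
 rewrite (rsum_ext _ _ (fun k => y * y * bw n k y + ((- 2 * y / INR n) * (INR k * bw n k y) +
    (1 / (INR n * INR n)) * (INR k * INR k * bw n k y)))).
 2:{ intros. field. lra. }
 rewrite rsum_plus, rsum_plus, !rsum_scal, bw_M0, bw_M1, bw_M2. field. lra. Qed.

Lemma abs_le_quad : forall x eta, 0 < eta -> Rabs x <= eta + x * x / eta.
Proof. intros. destruct (Rle_dec (Rabs x) eta). assert (0 <= x * x / eta).
 { apply Rdiv_le_0_compat; nra. } lra.
 assert (x * x = Rabs x * Rabs x) by (unfold Rabs; destruct Rcase_abs; ring).
 rewrite H0. assert (Rabs x * Rabs x / eta >= Rabs x). 
 { apply Rle_ge. apply Rmult_le_reg_r with eta; auto. unfold Rdiv. rewrite Rmult_assoc, Rinv_l by lra. nra. }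
 lra. Qed.

Lemma bernstein : forall (u : R -> R) L, 0 <= L ->
  (forall a b, 0 <= a <= 1 -> 0 <= b <= 1 -> Rabs (u a - u b) <= L * Rabs (a - b)) ->
  forall eps, 0 < eps -> exists n, (1 <= n)%nat /\ forall y, 0 <= y <= 1 ->
    Rabs (u y - rsum (S n) (fun k => u (INR k / INR n) * bw n k y)) <= eps.
Proof. intros u L HL Hu eps He.
 set (eta := eps / (2 * L + 1)).
 assert (Heta : 0 < eta) by (unfold eta; apply Rdiv_lt_0_compat; lra).
 assert (HLeta : L * eta <= eps / 2).
 { unfold eta. apply Rmult_le_reg_r with (2 * L + 1). lra.
   replace (L * (eps / (2 * L + 1)) * (2 * L + 1)) with (L*eps) by (field; lra). nra. }
 destruct (INR_archimed (eta * eps / 2) (L + 1)) as [n Hn].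
 { assert (0 < eta * eps) by nra. lra. }
 assert (Hn1 : (1 <= n)%nat). { destruct n. simpl in Hn. exfalso; lra. lia. }
 exists n; split; auto. intros y Hy.
 assert (HnR : 0 < INR n) by (apply lt_0_INR; lia).
 replace (u y) with (rsum (S n) (fun k => u y * bw n k y)) by (rewrite rsum_scal, bw_M0; ring).
 rewrite <- rsum_minus. eapply Rle_trans. apply rsum_abs.
 eapply Rle_trans with (rsum (S n) (fun k => L * (eta * bw n k y + / eta * ((y - INR k / INR n) * (y - INR k / INR n) * bw n k y)))).
 { apply rsum_le. intros k Hk. 
   assert (0 <= INR k / INR n <= 1).
   { split. apply Rdiv_le_0_compat; auto. apply pos_INR. apply Rmult_le_reg_r with (INR n); auto.
     unfold Rdiv. rewrite Rmult_assoc, Rinv_l by lra. rewrite Rmult_1_l, Rmult_1_r. apply le_INR. lia. }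
   replace (u y * bw n k y - u (INR k / INR n) * bw n k y) with ((u y - u (INR k / INR n)) * bw n k y) by ring.
   rewrite Rabs_mult. rewrite (Rabs_right (bw n k y)) by (apply Rle_ge, bw_nonneg; auto).
   assert (0 <= bw n k y) by (apply bw_nonneg; auto).
   specialize (Hu y (INR k / INR n) Hy H).
   specialize (abs_le_quad (y - INR k / INR n) eta Heta) as Hq.
   assert (Rabs (u y - u (INR k / INR n)) <= L * (eta + (y - INR k / INR n) * (y - INR k / INR n) / eta)) by
     (eapply Rle_trans; [apply Hu| apply Rmult_le_compat_l; auto]).
   unfold Rdiv in H1. 
   apply Rle_trans with (L * (eta + (y - INR k * / INR n) * (y - INR k * / INR n) * / eta) * bw n k y).
   apply Rmult_le_compat_r; auto. right. unfold Rdiv. ring. }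
 rewrite rsum_scal, rsum_plus, !rsum_scal, bw_M0, bw_var by auto.
 assert (y * (1 - y) <= 1) by nra.
 assert (L * (/ eta * (y * (1 - y) / INR n)) <= eps / 2).
 { apply Rle_trans with (L * (/eta * (1 / INR n))).
   apply Rmult_le_compat_l; auto. apply Rmult_le_compat_l. left; apply Rinv_0_lt_compat; auto.
   unfold Rdiv. apply Rmult_le_compat_r. left; apply Rinv_0_lt_compat; auto. auto.
   replace (L * (/ eta * (1 / INR n))) with (L / (eta * INR n)) by (field; lra).
   apply Rmult_le_reg_r with (eta * INR n). nra. unfold Rdiv. rewrite Rmult_assoc, Rinv_l by nra. nra. }
 nra. Qed.


Definition esum (l : list (R*R)) (t : R) : R :=
  fold_right (fun p acc => fst p * exp (snd p * t) + acc) 0 l.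

Definition InE (h : R -> R) : Prop := exists l, forall t, h t = esum l t.

Lemma esum_app : forall l1 l2 t, esum (l1 ++ l2) t = esum l1 t + esum l2 t.
Proof. induction l1; intros; simpl. ring. rewrite IHl1. ring. Qed.

Lemma esum_map : forall l w b t,
  esum (map (fun p => (w * fst p, b + snd p)) l) t = w * exp (b * t) * esum l t.
Proof. induction l; intros; simpl. ring. rewrite IHl. rewrite Rmult_plus_distr_r, exp_plus. ring. Qed.

Definition eprod (l1 l2 : list (R*R)) : list (R*R) :=
  flat_map (fun p => map (fun p' => (fst p * fst p', snd p + snd p')) l2) l1.

Lemma esum_prod : forall l1 l2 t, esum (eprod l1 l2) t = esum l1 t * esum l2 t.
Proof. induction l1; intros; simpl. ring. unfold eprod in *. simpl. rewrite esum_app, esum_map, IHl1. ring. Qed.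

Lemma InE_const : forall c, InE (fun _ => c).
Proof. intros. exists ((c,0)::nil). intros. simpl. rewrite Rmult_0_l, exp_0. ring. Qed.

Lemma InE_exp : forall b, InE (fun t => exp (b * t)).
Proof. intros. exists ((1,b)::nil). intros. simpl. ring. Qed.

Lemma InE_plus : forall f g, InE f -> InE g -> InE (fun t => f t + g t).
Proof. intros f g [l1 H1] [l2 H2]. exists (l1 ++ l2). intros. rewrite esum_app, H1, H2. auto. Qed.

Lemma InE_mult : forall f g, InE f -> InE g -> InE (fun t => f t * g t).
Proof. intros f g [l1 H1] [l2 H2]. exists (eprod l1 l2). intros. rewrite esum_prod, H1, H2. auto. Qed.

Lemma InE_ext : forall f g, InE f -> (forall t, f t = g t) -> InE g.
Proof. intros f g [l H] E. exists l. intros. rewrite <- E. auto. Qed.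

Lemma InE_rsum : forall n (F : nat -> R -> R), (forall k, InE (F k)) -> InE (fun t => rsum n (fun k => F k t)).
Proof. induction n; intros. simpl. apply InE_const. simpl. apply InE_plus; auto. Qed.

Lemma InE_bw : forall v, InE v -> forall n k, InE (fun t => bw n k (v t)).
Proof. intros v Hv. induction n; intros. simpl. destruct k; apply InE_const.
 simpl. apply InE_plus. apply InE_mult; auto. destruct k. apply InE_const. apply IHn.
 apply InE_mult; auto. apply (InE_ext (fun t => 1 + -1 * v t)). 2:{ intros; ring. }
 apply (InE_plus (fun _ => 1) (fun t => -1 * v t)). apply InE_const.
 apply InE_mult; auto. apply InE_const. Qed.

Definition gsum (l : list (R*R*R)) (t : R) : R :=
  fold_right (fun p acc => fst (fst p) * K ((t - snd (fst p)) / snd p) + acc) 0 l.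

Definition GAp (a b : R) (h : R -> R) : Prop :=
  forall eps, 0 < eps -> exists l, Forall (fun p => 0 < snd p) l /\
    forall t, a <= t <= b -> Rabs (h t - gsum l t) <= eps.

Lemma gsum_app : forall l1 l2 t, gsum (l1 ++ l2) t = gsum l1 t + gsum l2 t.
Proof. induction l1; intros; simpl. ring. rewrite IHl1. ring. Qed.

Lemma GAp_plus : forall a b f g, GAp a b f -> GAp a b g -> GAp a b (fun t => f t + g t).
Proof. intros a b f g Hf Hg eps He. destruct (Hf (eps/2)) as [l1 [P1 H1]]. lra.
 destruct (Hg (eps/2)) as [l2 [P2 H2]]. lra. exists (l1 ++ l2). split. apply Forall_app; auto.
 intros. rewrite gsum_app. specialize (H1 t H); specialize (H2 t H).
 replace (f t + g t - (gsum l1 t + gsum l2 t)) with ((f t - gsum l1 t) + (g t - gsum l2 t)) by ring.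
 eapply Rle_trans. apply Rabs_triang. lra. Qed.

Lemma GAp_zero : forall a b, GAp a b (fun _ => 0).
Proof. intros a b eps He. exists nil. split. constructor. intros. simpl. rewrite Rminus_0_r, Rabs_R0. lra. Qed.

Lemma one_minus_exp : forall x, 0 <= x -> 0 <= 1 - exp (- x) <= x.
Proof. intros. split. assert (exp (-x) <= 1). { rewrite <- exp_0. destruct (Req_dec x 0). subst. rewrite Ropp_0. lra.
   left. apply exp_increasing. lra. } lra.
 assert (1 + - x <= exp (- x)) by apply exp_ineq1_le. lra. Qed.

Lemma GAp_expterm : forall a b w beta, GAp a b (fun t => w * exp (beta * t)).
Proof. intros a b w beta eps He.
 set (R0 := Rabs a + Rabs b).
 set (X := Rabs w * exp (Rabs beta * R0) * (R0 * R0)).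
 assert (HX : 0 <= X). { unfold X. apply Rmult_le_pos. apply Rmult_le_pos. apply Rabs_pos. left; apply exp_pos. nra. }
 set (s := X / eps + 1).
 assert (Hs : 1 <= s). { unfold s. assert (0 <= X / eps) by (apply Rdiv_le_0_compat; lra). lra. }
 exists ((w * exp (beta * beta * s * s / 4), beta * s * s / 2, s) :: nil). split.
 constructor; simpl; [lra | constructor].
 intros t Ht. simpl. unfold K.
 assert (E: w * exp (beta * beta * s * s / 4) * exp (- ((t - beta * s * s / 2) / s * ((t - beta * s * s / 2) / s))) + 0
   = w * exp (beta * t) * exp (- (t * t / (s * s)))).
 { rewrite Rplus_0_r, !Rmult_assoc, <- !exp_plus. f_equal. f_equal. field. lra. }
 rewrite E. clear E.
 replace (w * exp (beta * t) - w * exp (beta * t) * exp (- (t * t / (s * s)))) with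
   (w * exp (beta * t) * (1 - exp (- (t * t / (s * s))))) by ring.
 assert (Ht2 : 0 <= t * t / (s * s)) by (apply Rdiv_le_0_compat; nra).
 destruct (one_minus_exp _ Ht2) as [O1 O2].
 rewrite Rabs_mult, Rabs_mult, (Rabs_right (exp _)) by (left; apply exp_pos).
 rewrite (Rabs_right (1 - _)) by lra.
 assert (Rabs t <= R0). { unfold R0. unfold Rabs; repeat destruct Rcase_abs; lra. }
 assert (exp (beta * t) <= exp (Rabs beta * R0)).
 { destruct (Req_dec (beta * t) (Rabs beta * R0)). rewrite H0; lra. left. apply exp_increasing.
   assert (beta * t <= Rabs (beta * t)) by apply RRle_abs. rewrite Rabs_mult in H1.
   assert (Rabs beta * Rabs t <= Rabs beta * R0) by (apply Rmult_le_compat_l; auto; apply Rabs_pos). lra. }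
 assert (t * t <= R0 * R0). { assert (t * t = Rabs t * Rabs t) by (unfold Rabs; destruct Rcase_abs; ring).
   rewrite H1. apply Rmult_le_compat; auto; apply Rabs_pos. }
 assert (t * t / (s * s) <= R0 * R0 / s).
 { unfold Rdiv. apply Rmult_le_compat; try nra. left; apply Rinv_0_lt_compat; nra.
   apply Rinv_le_contravar; nra. }
 apply Rle_trans with (Rabs w * exp (Rabs beta * R0) * (R0 * R0 / s)).
 { apply Rmult_le_compat. apply Rmult_le_pos; [apply Rabs_pos| left; apply exp_pos]. lra.
   apply Rmult_le_compat_l; auto. apply Rabs_pos. lra. }
 replace (Rabs w * exp (Rabs beta * R0) * (R0 * R0 / s)) with (X / s) by (unfold X; field; lra).
 apply Rmult_le_reg_r with s. lra. replace (X / s * s) with X by (field; lra).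
 unfold s. replace (eps * (X / eps + 1)) with (X + eps) by (field; lra). lra. Qed.

Lemma GAp_esum : forall a b l, GAp a b (esum l).
Proof. induction l. simpl. apply GAp_zero. simpl. apply (GAp_plus a b (fun t => fst a0 * exp (snd a0 * t)) (esum l)).
 apply GAp_expterm. auto. Qed.

Lemma GAp_InE : forall a b h, InE h -> GAp a b h.
Proof. intros a b h [l Hl] eps He. destruct (GAp_esum a b l eps He) as [l' [P H]]. exists l'. split; auto.
 intros. rewrite Hl. auto. Qed.

Lemma ln_lip : forall A x y, 0 < A -> A <= x -> A <= y -> Rabs (ln x - ln y) <= Rabs (x - y) / A.
Proof. assert (Hl : forall z, 0 < z -> ln z <= z - 1).
 { intros. assert (1 + ln z <= exp (ln z)) by apply exp_ineq1_le. rewrite exp_ln in H0; auto. lra. }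
 assert (forall A x y, 0 < A -> A <= y -> y <= x -> Rabs (ln x - ln y) <= Rabs (x - y) / A).
 { intros. assert (ln y <= ln x). { destruct (Req_dec x y). subst; lra. left. apply ln_increasing; lra. }
   rewrite Rabs_right by lra. rewrite Rabs_right by lra.
   assert (ln x - ln y = ln (x / y)). { unfold Rdiv. rewrite ln_mult, ln_Rinv; try lra. apply Rinv_0_lt_compat; lra. }
   assert (0 < x / y) by (apply Rdiv_lt_0_compat; lra).
   specialize (Hl _ H4). rewrite <- H3 in Hl.
   assert (x / y - 1 = (x - y) / y) by (field; lra).
   assert ((x - y) / y <= (x - y) / A). { unfold Rdiv. apply Rmult_le_compat_l. lra. apply Rinv_le_contravar; lra. }
   lra. }
 intros. destruct (Rle_dec y x). apply H; auto.
 rewrite Rabs_minus_sym, (Rabs_minus_sym x). apply H; auto; lra. Qed.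

Theorem gauss_approx : forall (g : R -> R) L a b, Lip L g -> forall eps, 0 < eps ->
  exists l, Forall (fun p => 0 < snd p) l /\ forall t, a <= t <= b -> Rabs (g t - gsum l t) <= eps.
Proof. intros g L a b HL eps He.
 assert (HL0 : 0 <= L) by (apply (Lip_nonneg L g 0 1); auto; lra).
 set (b' := Rmax b (a + 1)).
 assert (Hb' : a + 1 <= b' /\ b <= b') by (unfold b', Rmax; destruct Rle_dec; lra).
 set (A := exp a). set (D := exp b' - A).
 assert (HA : 0 < A) by apply exp_pos.
 assert (HD : 0 < D). { unfold D, A. assert (exp a < exp b') by (apply exp_increasing; lra). lra. }
 set (u := fun y => g (ln (A + y * D))).
 assert (Hu : forall y1 y2, 0 <= y1 <= 1 -> 0 <= y2 <= 1 -> Rabs (u y1 - u y2) <= (L * D / A) * Rabs (y1 - y2)).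
 { intros. unfold u. eapply Rle_trans. apply HL. 
   assert (Rabs (ln (A + y1 * D) - ln (A + y2 * D)) <= Rabs (A + y1 * D - (A + y2 * D)) / A).
   apply ln_lip; nra.
   replace (A + y1 * D - (A + y2 * D)) with (D * (y1 - y2)) in H1 by ring. rewrite Rabs_mult, (Rabs_right D) in H1 by lra.
   apply Rle_trans with (L * (D * Rabs (y1 - y2) / A)). apply Rmult_le_compat_l; auto.
   right. field. lra. }
 assert (HLu : 0 <= L * D / A) by (apply Rdiv_le_0_compat; nra).
 destruct (bernstein u _ HLu Hu (eps / 2)) as [n [Hn Hb]]. lra.
 set (v := fun t => (exp t - A) / D).
 assert (Hv : InE v). { apply (InE_ext (fun t => (/D) * exp (1 * t) + (- A / D))).
   apply InE_plus. apply InE_mult. apply InE_const. apply InE_exp. apply InE_const.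
   intros. unfold v. rewrite Rmult_1_l. field. lra. }
 set (P := fun t => rsum (S n) (fun k => u (INR k / INR n) * bw n k (v t))).
 assert (HP : InE P). { unfold P. apply (InE_rsum (S n) (fun k t => u (INR k / INR n) * bw n k (v t))).
   intros. apply InE_mult. apply InE_const. apply InE_bw; auto. }
 destruct (GAp_InE a b P HP (eps / 2)) as [l [Pl Hl]]. lra.
 exists l. split; auto. intros t Ht.
 assert (Hvt : 0 <= v t <= 1). { unfold v. split. apply Rdiv_le_0_compat; auto.
   unfold A. destruct (Req_dec t a). subst. lra. left. assert (exp a < exp t) by (apply exp_increasing; lra). lra.
   apply Rmult_le_reg_r with D; auto. unfold Rdiv. rewrite Rmult_assoc, Rinv_l by lra.
   unfold D. assert (exp t <= exp b'). { destruct (Req_dec t b'). subst; lra. left; apply exp_increasing; lra. } lra. }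
 assert (Hut : u (v t) = g t). { unfold u, v. replace (A + (exp t - A) / D * D) with (exp t) by (field; lra).
   rewrite ln_exp. auto. }
 specialize (Hb (v t) Hvt). rewrite Hut in Hb. specialize (Hl t Ht). unfold P in Hl.
 replace (g t - gsum l t) with ((g t - rsum (S n) (fun k => u (INR k / INR n) * bw n k (v t))) +
   (rsum (S n) (fun k => u (INR k / INR n) * bw n k (v t)) - gsum l t)) by ring.
 eapply Rle_trans. apply Rabs_triang. lra. Qed.


Definition UCc (d : nat) (r : (nat -> R) -> R) : Prop :=
  forall e, 0 < e -> exists delta, 0 < delta /\ forall x y, in_cube d x -> in_cube d y ->
    (forall p, (p < d)%nat -> Rabs (x p - y p) <= delta) -> Rabs (r x - r y) <= e.

Section UC.
Variable d : nat.
Variable f : (nat -> R) -> R.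
Hypothesis Hf : cont_on_cube d f.
Variable e : R.
Hypothesis He : 0 < e.

Definition inbox (lo hi x : nat -> R) := forall p, (p < d)%nat -> lo p <= x p <= hi p.
Definition GoodB (lo hi : nat -> R) := exists delta, 0 < delta /\ forall x y, in_cube d x -> in_cube d y ->
  inbox lo hi x -> (forall p, (p < d)%nat -> Rabs (x p - y p) < delta) -> Rabs (f x - f y) < e.
Definition upd (g : nat -> R) (j : nat) (v : R) : nat -> R := fun p => if Nat.eq_dec p j then v else g p.

Lemma split_good : forall lo hi j, (j < d)%nat -> GoodB lo (upd hi j ((lo j + hi j)/2)) ->
  GoodB (upd lo j ((lo j + hi j)/2)) hi -> GoodB lo hi.
Proof. intros lo hi j Hj [d1 [P1 H1]] [d2 [P2 H2]]. exists (Rmin d1 d2). split. apply Rmin_glb_lt; auto.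
 intros x y Hx Hy Hb Hxy. destruct (Rle_dec (x j) ((lo j + hi j)/2)).
 - apply H1; auto. intros p Hp. unfold upd. destruct Nat.eq_dec. subst. specialize (Hb j Hp). lra. auto.
   intros. specialize (Hxy p H). assert (Rmin d1 d2 <= d1) by apply Rmin_l. lra.
 - apply H2; auto. intros p Hp. unfold upd. destruct Nat.eq_dec. subst. specialize (Hb j Hp). lra. auto.
   intros. specialize (Hxy p H). assert (Rmin d1 d2 <= d2) by apply Rmin_r. lra. Qed.

Definition nested (lo hi lo' hi' : nat -> R) := forall p, (p < d)%nat -> lo p <= lo' p /\ lo' p <= hi' p /\ hi' p <= hi p.

Lemma round : forall lo hi s, ~ GoodB lo hi -> (forall p, (p < d)%nat -> lo p <= hi p /\ hi p - lo p <= s) ->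
  exists lo' hi', ~ GoodB lo' hi' /\ nested lo hi lo' hi' /\ forall p, (p < d)%nat -> hi' p - lo' p <= s / 2.
Proof. intros lo hi s Hng Hw.
 assert (forall i, (i <= d)%nat -> exists lo' hi', ~ GoodB lo' hi' /\ nested lo hi lo' hi' /\
   forall p, (p < d)%nat -> (hi' p - lo' p <= (if Nat.ltb p i then s / 2 else s))).
 { induction i; intros.
   - exists lo, hi. split; auto. split. intros p Hp. specialize (Hw p Hp). lra. intros. simpl. apply Hw; auto.
   - destruct IHi as [lo1 [hi1 [N1 [Ne1 W1]]]]. lia.
     set (m := (lo1 i + hi1 i) / 2).
     destruct (classic (GoodB lo1 (upd hi1 i m))) as [G1|G1].
     + destruct (classic (GoodB (upd lo1 i m) hi1)) as [G2|G2].
       * exfalso. apply N1. apply (split_good lo1 hi1 i); auto; lia.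
       * exists (upd lo1 i m), hi1. split; auto. split.
         intros p Hp. specialize (Ne1 p Hp). unfold upd. destruct Nat.eq_dec; [subst p; unfold m; repeat split; lra | repeat split; lra].
         intros p Hp. specialize (W1 p Hp). specialize (Ne1 p Hp). unfold upd. destruct Nat.eq_dec.
         subst i. unfold m. destruct (Nat.ltb_spec p p); try lia. destruct (Nat.ltb_spec p (S p)); try lia. lra.
         destruct (Nat.ltb_spec p i); destruct (Nat.ltb_spec p (S i)); try lia; lra.
     + exists lo1, (upd hi1 i m). split; auto. split.
         intros p Hp. specialize (Ne1 p Hp). unfold upd. destruct Nat.eq_dec; [subst p; unfold m; repeat split; lra | repeat split; lra].
         intros p Hp. specialize (W1 p Hp). specialize (Ne1 p Hp). unfold upd. destruct Nat.eq_dec.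
         subst i. unfold m. destruct (Nat.ltb_spec p p); try lia. destruct (Nat.ltb_spec p (S p)); try lia. lra.
         destruct (Nat.ltb_spec p i); destruct (Nat.ltb_spec p (S i)); try lia; lra. }
 destruct (H d) as [lo' [hi' [A [B C]]]]. lia. exists lo', hi'. split; auto. split; auto.
 intros. specialize (C p H0). destruct (Nat.ltb_spec p d); try lia. auto. Qed.

Definition BoxT := ((nat -> R) * (nat -> R))%type.
Definition stepP (j : nat) (b b' : BoxT) : Prop := ~ GoodB (fst b') (snd b') /\ nested (fst b) (snd b) (fst b') (snd b') /\
  forall p, (p < d)%nat -> snd b' p - fst b' p <= (/2) ^ (S j).
Definition inhB : inhabited BoxT := inhabits ((fun _ => 0), (fun _ => 0)).
Fixpoint chain (j : nat) : BoxT :=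
  match j with
  | O => ((fun _ => 0), (fun _ => 1))
  | S j' => epsilon inhB (stepP j' (chain j'))
  end.

Lemma chain_spec : ~ GoodB (fun _ => 0) (fun _ => 1) -> forall j,
  ~ GoodB (fst (chain j)) (snd (chain j)) /\ (forall p, (p < d)%nat -> fst (chain j) p <= snd (chain j) p /\
     snd (chain j) p - fst (chain j) p <= (/2)^j) /\ stepP j (chain j) (chain (S j)).
Proof. intros H0. 
 assert (forall j, ~ GoodB (fst (chain j)) (snd (chain j)) /\ (forall p, (p < d)%nat -> fst (chain j) p <= snd (chain j) p /\
     snd (chain j) p - fst (chain j) p <= (/2)^j)).
 { induction j. simpl. split; auto. intros; lra.
   destruct IHj as [A B]. destruct (round _ _ ((/2)^j) A B) as [lo' [hi' [C [D E]]]].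
   assert (stepP j (chain j) (lo', hi')). { split; auto. split; auto. simpl. intros. replace (/2 * (/2)^j) with ((/2)^j/2) by (field). auto. }
   assert (S1 : stepP j (chain j) (chain (S j))). { simpl. apply epsilon_spec. exists (lo', hi'); auto. }
   destruct S1 as [F [G I]]. split; auto. intros. specialize (G p H1). specialize (I p H1). split; lra. }
 intros j. destruct (H j) as [A B]. split; auto. split; auto.
 destruct (round _ _ ((/2)^j) A B) as [lo' [hi' [C [D E]]]].
 simpl. apply epsilon_spec. exists (lo', hi'). split; auto. split; auto. simpl. intros.
 replace (/2 * (/2)^j) with ((/2)^j/2) by (field). auto. Qed.

Lemma cube_good : GoodB (fun _ => 0) (fun _ => 1).
Proof. apply NNPP. intros H0. pose proof (chain_spec H0) as CS.
 assert (MON : forall j k, forall p, (p < d)%nat -> fst (chain j) p <= fst (chain (j + k)) p /\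
     snd (chain (j + k)) p <= snd (chain j) p).
 { intros j k. induction k; intros. rewrite Nat.add_0_r. lra. specialize (IHk p H).
   destruct (CS (j + k)%nat) as [_ [_ [_ [N _]]]]. specialize (N p H). rewrite Nat.add_succ_r. lra. }
 assert (HB : forall p, bound (fun r => exists j, r = Rmin 1 (fst (chain j) p))).
 { intros p. exists 1. intros r [j Hr]. subst. apply Rmin_l. }
 assert (HE : forall p, exists r, (fun r => exists j, r = Rmin 1 (fst (chain j) p)) r).
 { intros p. exists (Rmin 1 (fst (chain O) p)). exists O. auto. }
 set (z := fun p => proj1_sig (completeness _ (HB p) (HE p))).
 assert (Hz : forall p, (p < d)%nat -> forall j, fst (chain j) p <= z p <= snd (chain j) p).
 { intros p Hp j. unfold z. destruct (completeness _ (HB p) (HE p)) as [zz [U L]]. simpl.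
   assert (Hlo1 : forall j', fst (chain j') p <= 1).
   { intros j'. destruct (MON O j' p Hp) as [_ M2]. destruct (CS j') as [_ [W _]]. specialize (W p Hp). simpl in M2. lra. }
   split.
   - apply U. exists j. unfold Rmin. destruct Rle_dec; auto. specialize (Hlo1 j). lra.
   - apply L. intros r [j' Hr]. subst r. apply Rle_trans with (fst (chain j') p). apply Rmin_r.
     destruct (le_lt_dec j j').
     + replace j' with (j + (j' - j))%nat by lia. destruct (MON j (j' - j)%nat p Hp) as [_ M2].
       destruct (CS (j + (j' - j))%nat) as [_ [W _]]. specialize (W p Hp). lra.
     + replace j with (j' + (j - j'))%nat by lia. destruct (MON j' (j - j')%nat p Hp) as [M1 _].
       destruct (CS (j' + (j - j'))%nat) as [_ [W _]]. specialize (W p Hp). lra. }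
 assert (Hzc : in_cube d z). { intros p Hp. specialize (Hz p Hp O). simpl in Hz. lra. }
 destruct (Hf z Hzc (e/2)) as [dz [Pdz Hdz]]. lra.
 destruct (pow_lt_1_zero (/2) ltac:(rewrite Rabs_right; lra) (dz / 2) ltac:(lra)) as [N HN].
 destruct (CS N) as [NG [W _]]. apply NG. exists (dz / 2). split. lra.
 intros x y Hx Hy Hb Hxy.
 assert (Hxz : forall p, (p < d)%nat -> Rabs (x p - z p) < dz / 2).
 { intros p Hp. specialize (HN N (le_n N)). rewrite Rabs_right in HN by (left; apply pow_lt; lra).
   specialize (Hb p Hp). specialize (Hz p Hp N). specialize (W p Hp). unfold Rabs; destruct Rcase_abs; lra. }
 assert (A1 : Rabs (f x - f z) < e / 2). { apply Hdz; auto. intros. specialize (Hxz p H). lra. }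
 assert (A2 : Rabs (f y - f z) < e / 2). { apply Hdz; auto. intros. specialize (Hxz p H). specialize (Hxy p H).
   replace (y p - z p) with ((x p - z p) - (x p - y p)) by ring. eapply Rle_lt_trans. apply Rabs_triang.
   rewrite Rabs_Ropp. lra. }
 replace (f x - f y) with ((f x - f z) - (f y - f z)) by ring. eapply Rle_lt_trans. apply Rabs_triang.
 rewrite Rabs_Ropp. lra. Qed.
End UC.

Theorem cont_UC : forall d f, cont_on_cube d f -> UCc d f.
Proof. intros d f Hf e He. destruct (cube_good d f Hf e He) as [dl [Pd H]]. exists (dl / 2). split. lra.
 intros x y Hx Hy Hxy. left. apply H; auto; intros p Hp; specialize (Hx p Hp); specialize (Hxy p Hp); simpl; lra.
Qed.

Theorem UC_bounded : forall d f, UCc d f -> exists B, 0 <= B /\ forall x, in_cube d x -> Rabs (f x) <= B.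
Proof. intros d f Hf. destruct (Hf 1 ltac:(lra)) as [dl [Pd H]].
 destruct (INR_archimed dl 1 Pd) as [N HN].
 assert (HN0 : 0 < INR N). { destruct N. simpl in HN. lra. apply lt_0_INR; lia. }
 exists (Rabs (f (fun _ => 0)) + INR N). split. assert (0 <= Rabs (f (fun _ => 0))) by apply Rabs_pos. lra.
 intros x Hx. set (xi := fun (i : nat) p => INR i / INR N * x p).
 assert (Hc : forall i, (i <= N)%nat -> in_cube d (xi i)).
 { intros i Hi p Hp. unfold xi. specialize (Hx p Hp). assert (0 <= INR i / INR N <= 1).
   { split. apply Rdiv_le_0_compat; auto. apply pos_INR. apply Rmult_le_reg_r with (INR N); auto.
     unfold Rdiv. rewrite Rmult_assoc, Rinv_l by lra. rewrite Rmult_1_r, Rmult_1_l. apply le_INR; auto. }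
   split; nra. }
 assert (forall i, (i <= N)%nat -> Rabs (f (xi i) - f (xi O)) <= INR i).
 { induction i; intros. rewrite Rminus_diag, Rabs_R0. simpl; lra.
   replace (f (xi (S i)) - f (xi O)) with ((f (xi (S i)) - f (xi i)) + (f (xi i) - f (xi O))) by ring.
   eapply Rle_trans. apply Rabs_triang. rewrite S_INR.
   assert (Rabs (f (xi (S i)) - f (xi i)) <= 1).
   { apply H; try apply Hc; try lia. intros p Hp. unfold xi. rewrite S_INR.
     replace ((INR i + 1) / INR N * x p - INR i / INR N * x p) with (x p / INR N) by (field; lra).
     specialize (Hx p Hp). rewrite Rabs_right. apply Rmult_le_reg_r with (INR N); auto.
     unfold Rdiv. rewrite Rmult_assoc, Rinv_l by lra. lra. apply Rle_ge, Rdiv_le_0_compat; lra. }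
   specialize (IHi ltac:(lia)). lra. }
 specialize (H0 N (le_n N)).
 assert (E1 : xi N = x). { apply functional_extensionality. intros p. unfold xi. field. lra. }
 assert (E0 : xi O = (fun _ => 0)). { apply functional_extensionality. intros p. unfold xi. simpl. field. lra. }
 rewrite E1, E0 in H0.
 replace (f x) with ((f x - f (fun _ => 0)) + f (fun _ => 0)) by ring. eapply Rle_trans. apply Rabs_triang. lra. Qed.


Fixpoint nsum (n : nat) (F : nat -> nat) : nat := match n with O => O | S k => (nsum k F + F k)%nat end.
Fixpoint zsum (n : nat) (F : nat -> Z) : Z := match n with O => 0%Z | S k => (zsum k F + F k)%Z end.

Lemma rsum_INR : forall n F, rsum n (fun p => INR (F p)) = INR (nsum n F).
Proof. induction n; intros; simpl. auto. rewrite IHn, plus_INR. auto. Qed.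
Lemma rsum_IZR : forall n F, rsum n (fun p => IZR (F p)) = IZR (zsum n F).
Proof. induction n; intros; simpl. auto. rewrite IHn, plus_IZR. auto. Qed.

Lemma nsum_lt : forall n B F, (1 <= B)%nat -> (forall p, (p < n)%nat -> F p < B)%nat ->
  (nsum n (fun p => F p * B ^ p) < B ^ n)%nat.
Proof. induction n; intros; simpl. lia. assert (nsum n (fun p => F p * B ^ p) < B ^ n)%nat by (apply IHn; auto).
 assert (F n < B)%nat by auto. assert (F n * B ^ n <= (B - 1) * B ^ n)%nat by (apply Nat.mul_le_mono_r; lia).
 assert ((B - 1) * B^n + B^n = B * B^n)%nat. { destruct B. lia. simpl. rewrite Nat.sub_0_r. lia. } lia. Qed.

Lemma divmod_uniq : forall (M a a' b b' : nat), (a < M)%nat -> (a' < M)%nat -> (a + b * M = a' + b' * M)%nat -> a = a' /\ b = b'.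
Proof. intros. assert (b = b'). { destruct (Nat.lt_trichotomy b b') as [Hl|[He|Hg]]; auto.
 assert (b * M + M <= b' * M)%nat. { replace (b * M + M)%nat with (S b * M)%nat by lia. apply Nat.mul_le_mono_r; lia. } lia.
 assert (b' * M + M <= b * M)%nat. { replace (b' * M + M)%nat with (S b' * M)%nat by lia. apply Nat.mul_le_mono_r; lia. } lia. }
 subst. split; auto. lia. Qed.

Lemma nsum_uniq : forall n B F G, (1 <= B)%nat -> (forall p, (p < n)%nat -> F p < B)%nat -> (forall p, (p < n)%nat -> G p < B)%nat ->
  nsum n (fun p => F p * B ^ p)%nat = nsum n (fun p => G p * B ^ p)%nat -> forall p, (p < n)%nat -> F p = G p.
Proof. induction n; intros. lia. simpl in H2.
 assert (A1 := nsum_lt n B F H ltac:(intros; apply H0; lia)).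
 assert (A2 := nsum_lt n B G H ltac:(intros; apply H1; lia)).
 destruct (divmod_uniq (B ^ n) _ _ _ _ A1 A2 H2) as [E1 E2].
 destruct (Nat.eq_dec p n). subst. auto. apply (IHn B F G); auto; try (intros; apply H0; lia); try (intros; apply H1; lia). lia. Qed.

Lemma zdivmod_uniq : forall (K M M' E E' : Z), (0 <= E < K)%Z -> (0 <= E' < K)%Z -> (K * M + E = K * M' + E')%Z -> M = M' /\ E = E'.
Proof. intros. assert (M = M'). { destruct (Z.lt_trichotomy M M') as [Hl|[He|Hg]]; auto; nia. } subst. lia. Qed.

Lemma IZR_ge1 : forall z, z <> 0%Z -> 1 <= Rabs (IZR z).
Proof. intros. rewrite <- abs_IZR. apply IZR_le. lia. Qed.

Section Stage.
Variable d : nat.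
Hypothesis Hd : (1 <= d)%nat.
Variable N : nat.
Hypothesis HN : (1 <= N)%nat.
Variable Tt : R.
Hypothesis HT : 0 < Tt.
Variable phi : nat -> nat -> R -> R.

Definition Qn := (2 * d + 1)%nat.
Definition Qr := INR Qn.
Definition hh := / INR N.
Definition ww := hh / (2 * Qr).
Definition aa (q k : nat) : R := (INR k + INR q / Qr) * hh.
Definition Bn := (N + 2)%nat.
Definition Kb := (Bn ^ d)%nat.
Definition xi (q k : nat) := Rmin 1 (aa q k).
Definition mm (p q k : nat) : Z := up (phi p q (xi q k) / (Tt * INR Kb)).
Definition vv (p q k : nat) : R := Tt * (INR Kb * IZR (mm p q k) + INR (k * Bn ^ p)).
Definition phi' (p q : nat) (t : R) : R :=
  vv p q 0 + rsum (S N) (fun k => (vv p q (S k) - vv p q k) * clamp ((t - aa q k + ww) / ww)).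
Definition goodt (q : nat) (t : R) := forall k, (k <= N)%nat -> ~ (aa q k - ww <= t <= aa q k).

Lemma Qr_pos : 3 <= Qr.
Proof. unfold Qr, Qn. rewrite plus_INR, mult_INR. simpl. assert (1 <= INR d) by (apply (le_INR 1); auto). lra. Qed.
Lemma hh_pos : 0 < hh.
Proof. unfold hh. apply Rinv_0_lt_compat. apply lt_0_INR; lia. Qed.
Lemma ww_pos : 0 < ww /\ ww < hh.
Proof. pose proof Qr_pos. pose proof hh_pos. unfold ww. split. apply Rdiv_lt_0_compat; lra.
 apply Rmult_lt_reg_r with (2 * Qr). lra. unfold Rdiv. rewrite Rmult_assoc, Rinv_l by lra. nra. Qed.
Lemma aa_S : forall q k, aa q (S k) = aa q k + hh.
Proof. intros. unfold aa. rewrite S_INR. ring. Qed.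
Lemma aa_le : forall q k k', (k <= k')%nat -> aa q k + INR (k' - k) * hh = aa q k'.
Proof. intros. unfold aa. rewrite minus_INR by auto. ring. Qed.
Lemma aa_N : forall q, 1 <= aa q N.
Proof. intros. unfold aa, hh. pose proof Qr_pos. assert (0 <= INR q / Qr) by (apply Rdiv_le_0_compat; [apply pos_INR|lra]).
 assert (0 < INR N) by (apply lt_0_INR; lia).
 rewrite Rmult_plus_distr_r. rewrite Rinv_r by lra. assert (0 <= INR q / Qr * / INR N).
 apply Rmult_le_pos; auto. left; apply Rinv_0_lt_compat; auto. lra. Qed.
Lemma aa_0 : forall q, (q < Qn)%nat -> 0 <= aa q 0 < hh.
Proof. intros. unfold aa. simpl. pose proof Qr_pos. pose proof hh_pos.
 assert (INR q < Qr) by (unfold Qr; apply lt_INR; auto).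
 assert (0 <= INR q / Qr < 1). { split. apply Rdiv_le_0_compat; [apply pos_INR|lra].
   apply Rmult_lt_reg_r with Qr. lra. unfold Rdiv. rewrite Rmult_assoc, Rinv_l by lra. lra. }
 split; nra. Qed.

Lemma index_ex : forall q t, (q < Qn)%nat -> 0 <= t <= 1 -> exists k1, (k1 <= N)%nat /\ aa q k1 - hh <= t <= aa q k1.
Proof. intros q t Hq Ht. assert (forall n, t <= aa q n -> exists k1, (k1 <= n)%nat /\ aa q k1 - hh <= t <= aa q k1).
 { induction n; intros. exists O. split; auto. pose proof (aa_0 q Hq). lra.
   destruct (Rle_dec t (aa q n)). destruct (IHn r) as [k1 [A B]]. exists k1. split; auto.
   exists (S n). split; auto. rewrite aa_S in *. lra. }
 apply H. pose proof (aa_N q). lra. Qed.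

Lemma phi'_eval : forall p q t k1, (k1 <= N)%nat -> aa q k1 - hh <= t <= aa q k1 ->
  phi' p q t = vv p q k1 + (vv p q (S k1) - vv p q k1) * clamp ((t - aa q k1 + ww) / ww).
Proof. intros p q t k1 Hk Ht. unfold phi'. pose proof ww_pos as [W1 W2].
 replace (S N) with (k1 + S (N - k1))%nat by lia. rewrite rsum_split, rsum_shift.
 rewrite Nat.add_0_r. rewrite (rsum_ext (N - k1) _ (fun _ => 0)). rewrite rsum_const.
 rewrite (rsum_ext k1 _ (fun k => vv p q (S k) - vv p q k)). rewrite rsum_telescope. ring.
 - intros k Hk1. rewrite clamp_1; [ring|]. apply Rmult_le_reg_r with ww; auto. unfold Rdiv. rewrite Rmult_assoc, Rinv_l by lra.
   assert (aa q k + INR (k1 - k) * hh = aa q k1) by (apply aa_le; lia).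
   assert (1 <= INR (k1 - k)) by (apply (le_INR 1); lia). pose proof hh_pos.
   assert (INR (k1 - k) * hh >= hh) by nra. lra.
 - intros k Hk1. rewrite clamp_0; [ring|]. apply Rmult_le_reg_r with ww; auto. unfold Rdiv. rewrite Rmult_assoc, Rinv_l by lra.
   assert (aa q k1 + INR (k1 + S k - k1) * hh = aa q (k1 + S k)) by (apply aa_le; lia).
   assert (1 <= INR (k1 + S k - k1)) by (apply (le_INR 1); lia). pose proof hh_pos.
   assert (INR (k1 + S k - k1) * hh >= hh) by nra. lra. Qed.

Lemma phi'_good : forall p q t k1, (k1 <= N)%nat -> aa q k1 - hh <= t <= aa q k1 -> goodt q t ->
  phi' p q t = vv p q k1 /\ t < aa q k1 - ww.
Proof. intros. assert (t < aa q k1 - ww). { destruct (Rlt_dec t (aa q k1 - ww)); auto. exfalso. apply (H1 k1 H). lra. }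
 split; auto. rewrite (phi'_eval p q t k1) by auto. rewrite clamp_0. ring. pose proof ww_pos as [W1 W2].
 apply Rmult_le_reg_r with ww; auto. unfold Rdiv. rewrite Rmult_assoc, Rinv_l by lra. lra. Qed.

Lemma bad_unique : forall q q' t, (q < Qn)%nat -> (q' < Qn)%nat -> ~ goodt q t -> ~ goodt q' t -> q = q'.
Proof. intros q q' t Hq Hq' H1 H2. unfold goodt in *.
 apply not_all_ex_not in H1. destruct H1 as [k H1]. apply imply_to_and in H1. destruct H1 as [Hk H1]. apply NNPP in H1.
 apply not_all_ex_not in H2. destruct H2 as [k' H2]. apply imply_to_and in H2. destruct H2 as [Hk' H2]. apply NNPP in H2.
 set (z := (Z.of_nat Qn * (Z.of_nat k - Z.of_nat k') + (Z.of_nat q - Z.of_nat q'))%Z).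
 assert (Ez : aa q k - aa q' k' = IZR z * (hh / Qr)).
 { unfold z, aa. rewrite plus_IZR, mult_IZR, !minus_IZR, <- !INR_IZR_INZ. unfold Qr. field.
   pose proof Qr_pos. unfold Qr in H. lra. }
 assert (Rabs (aa q k - aa q' k') <= ww) by (unfold Rabs; destruct Rcase_abs; lra).
 assert (z = 0%Z). { destruct (Z.eq_dec z 0); auto. exfalso. pose proof (IZR_ge1 z n). rewrite Ez, Rabs_mult in H.
   pose proof Qr_pos. pose proof hh_pos. rewrite (Rabs_right (hh / Qr)) in H by (left; apply Rdiv_lt_0_compat; lra).
   unfold ww in H. assert (hh / Qr <= Rabs (IZR z) * (hh / Qr)).
   { rewrite <- (Rmult_1_l (hh / Qr)) at 1. apply Rmult_le_compat_r; auto. left; apply Rdiv_lt_0_compat; lra. }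
   assert (hh / (2 * Qr) < hh / Qr). { unfold Rdiv. apply Rmult_lt_compat_l; auto. apply Rinv_lt_contravar; nra. } lra. }
 unfold z in H0. unfold Qn in *. destruct (Nat.lt_trichotomy k k') as [Hl|[He|Hg]]; [nia|subst; lia|nia]. Qed.

Lemma Kb_pos : 1 <= INR Kb.
Proof. apply (le_INR 1). unfold Kb, Bn.
 assert (1 ^ d <= (N+2)^d)%nat. { apply Nat.pow_le_mono_l. lia. }
 rewrite Nat.pow_1_l in H. auto. Qed.

Lemma xi_range : forall q k, (q < Qn)%nat -> 0 <= xi q k <= 1.
Proof. intros. unfold xi. pose proof (aa_0 q H). assert (aa q 0 <= aa q k).
 { rewrite <- (aa_le q 0 k) by lia. assert (0 <= INR (k - 0) * hh). apply Rmult_le_pos. apply pos_INR. left; apply hh_pos. lra. }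
 unfold Rmin; destruct Rle_dec; lra. Qed.

Lemma xi_close : forall q k t, 0 <= t <= 1 -> Rabs (xi q k - t) <= Rabs (aa q k - t).
Proof. intros. unfold xi, Rmin. destruct Rle_dec. unfold Rabs; repeat destruct Rcase_abs; lra. right; reflexivity. Qed.

Lemma vv_close : forall p q k, (p < d)%nat -> (k <= S N)%nat ->
  0 <= vv p q k - phi p q (xi q k) <= 2 * Tt * INR Kb.
Proof. intros. unfold vv, mm. pose proof Kb_pos.
 set (X := phi p q (xi q k)). destruct (archimed (X / (Tt * INR Kb))) as [A1 A2].
 assert (E : Tt * INR Kb * (X / (Tt * INR Kb)) = X) by (field; nra).
 assert (0 <= INR (k * Bn ^ p) <= INR Kb).
 { split. apply pos_INR. apply le_INR. unfold Kb. assert (k * Bn^p < Bn * Bn^p)%nat.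
   { apply Nat.mul_lt_mono_pos_r. assert (0 < Bn)%nat by (unfold Bn; lia). apply Nat.neq_0_lt_0. apply Nat.pow_nonzero. lia. unfold Bn; lia. }
   assert (Bn * Bn ^ p <= Bn ^ d)%nat. { replace (Bn * Bn^p)%nat with (Bn ^ S p)%nat by auto. apply Nat.pow_le_mono_r. unfold Bn; lia. lia. }
   lia. }
 assert (Tt * INR Kb * (X / (Tt * INR Kb)) < Tt * INR Kb * IZR (up (X / (Tt * INR Kb)))) by (apply Rmult_lt_compat_l; nra).
 assert (Tt * INR Kb * IZR (up (X / (Tt * INR Kb))) <= Tt * INR Kb * (X / (Tt * INR Kb)) + Tt * INR Kb) by nra.
 split; nra. Qed.

Variable L C : R.
Hypothesis HL : 0 <= L.
Hypothesis Hphi : forall p q, (p < d)%nat -> (q < Qn)%nat -> Lip L (phi p q) /\ forall t, 0 <= t <= 1 -> Rabs (phi p q t) <= C.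

Lemma phi'_close : forall p q t, (p < d)%nat -> (q < Qn)%nat -> 0 <= t <= 1 ->
  Rabs (phi' p q t - phi p q t) <= 2 * Tt * INR Kb + 2 * L * hh.
Proof. intros p q t Hp Hq Ht. destruct (index_ex q t Hq Ht) as [k1 [Hk1 Hi]].
 rewrite (phi'_eval p q t k1) by auto. destruct (Hphi p q Hp Hq) as [Lp _].
 set (lam := clamp ((t - aa q k1 + ww) / ww)). pose proof (clamp_range ((t - aa q k1 + ww) / ww)) as Hlam. fold lam in Hlam.
 assert (B1 : Rabs (vv p q k1 - phi p q t) <= 2 * Tt * INR Kb + 2 * L * hh).
 { pose proof (vv_close p q k1 Hp ltac:(lia)). pose proof (Lp (xi q k1) t). pose proof (xi_close q k1 t Ht).
   assert (Rabs (aa q k1 - t) <= hh) by (unfold Rabs; destruct Rcase_abs; lra). pose proof hh_pos.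
   replace (vv p q k1 - phi p q t) with ((vv p q k1 - phi p q (xi q k1)) + (phi p q (xi q k1) - phi p q t)) by ring.
   eapply Rle_trans. apply Rabs_triang. rewrite Rabs_right by lra. nra. }
 assert (B2 : Rabs (vv p q (S k1) - phi p q t) <= 2 * Tt * INR Kb + 2 * L * hh).
 { pose proof (vv_close p q (S k1) Hp ltac:(lia)). pose proof (Lp (xi q (S k1)) t). pose proof (xi_close q (S k1) t Ht).
   rewrite aa_S in H1. assert (Rabs (aa q k1 + hh - t) <= 2 * hh) by (unfold Rabs; destruct Rcase_abs; pose proof hh_pos; lra).
   replace (vv p q (S k1) - phi p q t) with ((vv p q (S k1) - phi p q (xi q (S k1))) + (phi p q (xi q (S k1)) - phi p q t)) by ring.
   eapply Rle_trans. apply Rabs_triang. rewrite Rabs_right by lra. nra. }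
 replace (vv p q k1 + (vv p q (S k1) - vv p q k1) * lam - phi p q t) with
   ((1 - lam) * (vv p q k1 - phi p q t) + lam * (vv p q (S k1) - phi p q t)) by ring.
 eapply Rle_trans. apply Rabs_triang. rewrite !Rabs_mult, (Rabs_right lam), (Rabs_right (1 - lam)) by lra. nra. Qed.

Definition Vm := C + 2 * Tt * INR Kb.

Lemma vv_bound : forall p q k, (p < d)%nat -> (q < Qn)%nat -> (k <= S N)%nat -> Rabs (vv p q k) <= Vm.
Proof. intros. pose proof (vv_close p q k H H1). destruct (Hphi p q H H0) as [_ Hb].
 specialize (Hb (xi q k) (xi_range q k H0)). unfold Vm. unfold Rabs in *; repeat destruct Rcase_abs; lra. Qed.

Lemma phi'_lip : forall p q, (p < d)%nat -> (q < Qn)%nat -> Lip (INR (S N) * (2 * Vm * / ww)) (phi' p q).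
Proof. intros p q Hp Hq. unfold phi'. pose proof ww_pos as [W1 W2].
 replace (INR (S N) * (2 * Vm * / ww)) with (0 + INR (S N) * (2 * Vm * / ww)) by ring.
 apply (Lip_plus 0 _ (fun _ => vv p q 0)). apply Lip_const.
 apply (Lip_rsum (S N) (2 * Vm * / ww) (fun k t => (vv p q (S k) - vv p q k) * clamp ((t - aa q k + ww) / ww))).
 intros k Hk. eapply Lip_mono.
 apply (Lip_scal (1 * Rabs (/ ww)) (vv p q (S k) - vv p q k) (fun t => clamp ((t - aa q k + ww) / ww))).
 intros a b. replace ((a - aa q k + ww) / ww) with (/ww * a + (ww - aa q k) / ww) by (field; lra).
 replace ((b - aa q k + ww) / ww) with (/ww * b + (ww - aa q k) / ww) by (field; lra).
 apply (Lip_affine 1 clamp). apply Lip_clamp.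
 rewrite Rmult_1_l, (Rabs_right (/ ww)) by (left; apply Rinv_0_lt_compat; auto).
 apply Rmult_le_compat_r. left; apply Rinv_0_lt_compat; auto.
 pose proof (vv_bound p q (S k) Hp Hq ltac:(lia)). pose proof (vv_bound p q k Hp Hq ltac:(lia)).
 assert (Rabs (vv p q (S k) - vv p q k) <= Rabs (vv p q (S k)) + Rabs (vv p q k)).
 { unfold Rminus. eapply Rle_trans. apply Rabs_triang. rewrite Rabs_Ropp. lra. } lra. Qed.

Definition Yp (q : nat) (x : nat -> R) := rsum d (fun p => phi' p q (x p)).
Definition goodx (q : nat) (x : nat -> R) := forall p, (p < d)%nat -> goodt q (x p).
Definition code (q : nat) (kp : nat -> nat) : Z :=
  (Z.of_nat Kb * zsum d (fun p => mm p q (kp p)) + Z.of_nat (nsum d (fun p => (kp p * Bn ^ p)%nat)))%Z.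

Lemma code_ex : forall q x, (q < Qn)%nat -> in_cube d x -> goodx q x ->
  exists kp, (forall p, (p < d)%nat -> (kp p <= N)%nat /\ aa q (kp p) - hh <= x p <= aa q (kp p)) /\
    Yp q x = Tt * IZR (code q kp).
Proof. intros q x Hq Hx Hg.
 set (P := fun p k => (p < d)%nat -> (k <= N)%nat /\ aa q k - hh <= x p <= aa q k).
 set (kp := fun p => epsilon (inhabits 0%nat) (P p)).
 assert (Hkp : forall p, P p (kp p)). { intros p. unfold kp. apply epsilon_spec.
   destruct (lt_dec p d). destruct (index_ex q (x p) Hq (Hx p l)) as [k1 [A B]]. exists k1. intros _. auto.
   exists O. unfold P. intros; exfalso; lia. }
 exists kp. split. intros p Hp. apply Hkp; auto.
 unfold Yp. rewrite (rsum_ext _ _ (fun p => Tt * (INR Kb * IZR (mm p q (kp p)) + INR (kp p * Bn ^ p)))).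
 - rewrite rsum_scal, rsum_plus, rsum_scal, rsum_IZR, rsum_INR. unfold code. rewrite plus_IZR, mult_IZR.
   rewrite <- !INR_IZR_INZ. auto.
 - intros p Hp. destruct (Hkp p Hp) as [A B]. destruct (phi'_good p q (x p) (kp p) A B (Hg p Hp)) as [E _]. rewrite E.
   unfold vv. auto. Qed.

Lemma code_inj : forall q kp kp', (forall p, (p < d)%nat -> kp p <= N)%nat -> (forall p, (p < d)%nat -> kp' p <= N)%nat ->
  code q kp = code q kp' -> forall p, (p < d)%nat -> kp p = kp' p.
Proof. intros q kp kp' H1 H2 E. unfold code in E.
 assert (B1 : (nsum d (fun p => kp p * Bn ^ p) < Kb)%nat) by (apply nsum_lt; unfold Bn; try lia; intros; specialize (H1 p H); lia).
 assert (B2 : (nsum d (fun p => kp' p * Bn ^ p) < Kb)%nat) by (apply nsum_lt; unfold Bn; try lia; intros; specialize (H2 p H); lia).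
 apply zdivmod_uniq in E; try lia. destruct E as [_ E]. apply Nat2Z.inj in E.
 apply (nsum_uniq d Bn); unfold Bn; try lia; auto; intros; [specialize (H1 p H)|specialize (H2 p H)]; lia. Qed.

Variable r : (nat -> R) -> R.
Variable B e : R.
Hypothesis HB0 : 0 <= B.
Hypothesis HB : forall x, in_cube d x -> Rabs (r x) <= B.
Hypothesis Hr : forall x y, in_cube d x -> in_cube d y -> (forall p, (p < d)%nat -> Rabs (x p - y p) <= hh) -> Rabs (r x - r y) <= e.

Definition Cp := C + 2 * Tt * INR Kb + 2 * L * hh.
Definition Zr : nat := Z.to_nat (up (INR d * Cp / Tt)).
Definition rc (x : nat -> R) := Rmax (- B) (Rmin B (r x)).
Definition inhX : inhabited (nat -> R) := inhabits (fun _ => 0).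
Definition AA (q : nat) (z : Z) : R :=
  rc (epsilon inhX (fun x => in_cube d x /\ goodx q x /\ Yp q x = Tt * IZR z)) / INR (S d).
Definition zi (i : nat) : Z := (Z.of_nat i - Z.of_nat Zr)%Z.
Definition bump (u : R) := clamp (2 - 4 * Rabs u).
Definition H' (q : nat) (y : R) : R := rsum (S (2 * Zr)) (fun i => AA q (zi i) * bump (y / Tt - IZR (zi i))).

Lemma bump_0 : forall u, 1/2 <= Rabs u -> bump u = 0.
Proof. intros. unfold bump. apply clamp_0. lra. Qed.
Lemma bump_at0 : bump 0 = 1.
Proof. unfold bump. rewrite Rabs_R0. apply clamp_1. lra. Qed.
Lemma bump_lip : Lip 4 bump.
Proof. intros a b. unfold bump. eapply Rle_trans. apply clamp_lip.
 replace (2 - 4 * Rabs a - (2 - 4 * Rabs b)) with (-4 * (Rabs a - Rabs b)) by ring.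
 rewrite Rabs_mult. replace (Rabs (-4)) with 4 by (rewrite Rabs_left; lra). 
 apply Rmult_le_compat_l. lra. apply Rabs_triang_inv2. Qed.

Lemma Cp_nonneg : 0 <= C -> 0 <= Cp.
Proof. intros. unfold Cp. pose proof Kb_pos. pose proof hh_pos. nra. Qed.

Lemma phi'_bound : forall p q t, (p < d)%nat -> (q < Qn)%nat -> 0 <= t <= 1 -> Rabs (phi' p q t) <= Cp.
Proof. intros. pose proof (phi'_close p q t H H0 H1). destruct (Hphi p q H H0) as [_ Hb]. specialize (Hb t H1).
 unfold Cp. replace (phi' p q t) with ((phi' p q t - phi p q t) + phi p q t) by ring.
 eapply Rle_trans. apply Rabs_triang. lra. Qed.

Lemma Yp_bound : forall q x, (q < Qn)%nat -> in_cube d x -> Rabs (Yp q x) <= INR d * Cp.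
Proof. intros. unfold Yp. eapply Rle_trans. apply rsum_abs. rewrite <- rsum_const. apply rsum_le.
 intros. apply phi'_bound; auto. Qed.

Lemma AA_bound : forall q z, Rabs (AA q z) <= B / INR (S d).
Proof. intros. unfold AA. assert (0 < INR (S d)) by (apply lt_0_INR; lia).
 unfold Rdiv. rewrite Rabs_mult, (Rabs_right (/ INR (S d))) by (left; apply Rinv_0_lt_compat; auto).
 apply Rmult_le_compat_r. left; apply Rinv_0_lt_compat; auto.
 unfold rc, Rmax, Rmin. repeat destruct Rle_dec; unfold Rabs; repeat destruct Rcase_abs; lra. Qed.

Lemma H'_bound : forall q y, Rabs (H' q y) <= B / INR (S d).
Proof. intros. unfold H'. apply rsum_atmost1.
 - intros. rewrite Rabs_mult. unfold bump. pose proof (clamp_range (2 - 4 * Rabs (y / Tt - IZR (zi k)))).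
   rewrite (Rabs_right (clamp _)) by lra. pose proof (AA_bound q (zi k)). pose proof (Rabs_pos (AA q (zi k))). nra.
 - intros i j Hi Hj Ni Nj. destruct (Nat.eq_dec i j); auto. exfalso.
   assert (Bi : bump (y / Tt - IZR (zi i)) <> 0) by (intro E; apply Ni; rewrite E; ring).
   assert (Bj : bump (y / Tt - IZR (zi j)) <> 0) by (intro E; apply Nj; rewrite E; ring).
   assert (Rabs (y / Tt - IZR (zi i)) < 1/2) by (destruct (Rlt_dec (Rabs (y / Tt - IZR (zi i))) (1/2)); auto; exfalso; apply Bi; apply bump_0; lra).
   assert (Rabs (y / Tt - IZR (zi j)) < 1/2) by (destruct (Rlt_dec (Rabs (y / Tt - IZR (zi j))) (1/2)); auto; exfalso; apply Bj; apply bump_0; lra).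
   assert (zi i - zi j <> 0)%Z by (unfold zi; lia). pose proof (IZR_ge1 _ H1). rewrite minus_IZR in H2.
   replace (IZR (zi i) - IZR (zi j)) with (- (y / Tt - IZR (zi i)) + (y / Tt - IZR (zi j))) in H2 by ring.
   pose proof (Rabs_triang (- (y / Tt - IZR (zi i))) (y / Tt - IZR (zi j))). rewrite Rabs_Ropp in H3. lra.
 - apply Rdiv_le_0_compat; auto. apply lt_0_INR; lia. Qed.

Lemma H'_lip : forall q, Lip (INR (S (2 * Zr)) * (B / INR (S d) * (4 * Rabs (/ Tt)))) (H' q).
Proof. intros. unfold H'. apply Lip_rsum. intros k Hk. eapply Lip_mono.
 apply (Lip_scal (4 * Rabs (/ Tt)) (AA q (zi k)) (fun y => bump (y / Tt - IZR (zi k)))).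
 intros a b. replace (a / Tt - IZR (zi k)) with (/Tt * a + - IZR (zi k)) by (field; lra).
 replace (b / Tt - IZR (zi k)) with (/Tt * b + - IZR (zi k)) by (field; lra).
 apply (Lip_affine 4 bump). apply bump_lip.
 apply Rmult_le_compat_r. assert (0 <= Rabs (/Tt)) by apply Rabs_pos. lra. apply AA_bound. Qed.

Lemma H'_code : forall q z, (Z.abs z <= Z.of_nat Zr)%Z -> H' q (Tt * IZR z) = AA q z.
Proof. intros. unfold H'. rewrite (rsum_single _ _ (Z.to_nat (z + Z.of_nat Zr))).
 - unfold zi. rewrite Z2Nat.id by lia. replace (z + Z.of_nat Zr - Z.of_nat Zr)%Z with z by ring.
   replace (Tt * IZR z / Tt - IZR z) with 0 by (field; lra). rewrite bump_at0. ring.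
 - lia.
 - intros k Hk Hne. rewrite bump_0. ring. replace (Tt * IZR z / Tt - IZR (zi k)) with (IZR (z - zi k)) by (rewrite minus_IZR; field; lra).
   assert (z - zi k <> 0)%Z. { unfold zi. intro. apply Hne. lia. } pose proof (IZR_ge1 _ H0). lra. Qed.

Lemma good_value : forall q x, (q < Qn)%nat -> in_cube d x -> goodx q x -> 0 <= C ->
  Rabs (H' q (Yp q x) - r x / INR (S d)) <= e / INR (S d).
Proof. intros q x Hq Hx Hg HC. destruct (code_ex q x Hq Hx Hg) as [kp [Hkp E]].
 set (c := code q kp).
 assert (Hc : (Z.abs c <= Z.of_nat Zr)%Z).
 { pose proof (Yp_bound q x Hq Hx). rewrite E in H. rewrite Rabs_mult, (Rabs_right Tt) in H by lra.
   assert (Rabs (IZR c) <= INR d * Cp / Tt). { apply Rmult_le_reg_l with Tt; auto. unfold Rdiv. 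
     replace (Tt * (INR d * Cp * / Tt)) with (INR d * Cp) by (field; lra). auto. }
   unfold Zr. destruct (archimed (INR d * Cp / Tt)) as [A1 _].
   assert (0 <= INR d * Cp / Tt). { apply Rdiv_le_0_compat; auto. apply Rmult_le_pos. apply pos_INR. apply Cp_nonneg; auto. }
   rewrite Z2Nat.id. rewrite <- abs_IZR in H0. apply le_IZR. lra. apply le_IZR. lra. }
 fold c in E. rewrite E. rewrite H'_code by auto. unfold AA.
 set (xs := epsilon inhX (fun x0 => in_cube d x0 /\ goodx q x0 /\ Yp q x0 = Tt * IZR c)).
 assert (Hxs : in_cube d xs /\ goodx q xs /\ Yp q xs = Tt * IZR c). { apply epsilon_spec. exists x. auto. }
 destruct Hxs as [Hxs1 [Hxs2 Hxs3]].
 destruct (code_ex q xs Hq Hxs1 Hxs2) as [kp' [Hkp' E']].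
 assert (Ec : code q kp' = c). { rewrite Hxs3 in E'. apply eq_IZR. apply Rmult_eq_reg_l with Tt; lra. }
 assert (Hsame : forall p, (p < d)%nat -> kp' p = kp p).
 { apply (code_inj q); auto; intros; [apply Hkp'|apply Hkp]; auto. }
 assert (Hclose : Rabs (r xs - r x) <= e).
 { apply Hr; auto. intros p Hp. destruct (Hkp p Hp) as [_ A]. destruct (Hkp' p Hp) as [_ B1]. rewrite Hsame in B1 by auto.
   unfold Rabs; destruct Rcase_abs; lra. }
 assert (rc xs = r xs). { unfold rc. pose proof (HB xs Hxs1). unfold Rmax, Rmin. repeat destruct Rle_dec; unfold Rabs in H; destruct Rcase_abs; lra. }
 rewrite H. assert (0 < INR (S d)) by (apply lt_0_INR; lia).
 replace (r xs / INR (S d) - r x / INR (S d)) with ((r xs - r x) / INR (S d)) by (field; lra).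
 unfold Rdiv. rewrite Rabs_mult, (Rabs_right (/ INR (S d))) by (left; apply Rinv_0_lt_compat; auto).
 apply Rmult_le_compat_r; auto. left; apply Rinv_0_lt_compat; auto. Qed.

Definition Ib (q : nat) (x : nat -> R) : R := if excluded_middle_informative (goodx q x) then 0 else 1.
Definition Jb (q : nat) (t : R) : R := if excluded_middle_informative (goodt q t) then 0 else 1.

Lemma rsum_ge_term : forall n F i, (forall k, (k < n)%nat -> 0 <= F k) -> (i < n)%nat -> F i <= rsum n F.
Proof. induction n; intros. lia. simpl. destruct (Nat.eq_dec i n). subst.
 assert (0 <= rsum n F) by (apply rsum_nonneg; intros; apply H; lia). lra.
 assert (F i <= rsum n F) by (apply IHn; [intros; apply H; lia | lia]). assert (0 <= F n) by (apply H; lia). lra. Qed.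

Lemma nb_le : forall x, rsum Qn (fun q => Ib q x) <= INR d.
Proof. intros x. apply Rle_trans with (rsum Qn (fun q => rsum d (fun p => Jb q (x p)))).
 - apply rsum_le. intros q Hq. unfold Ib. destruct excluded_middle_informative.
   + apply rsum_nonneg. intros. unfold Jb. destruct excluded_middle_informative; lra.
   + unfold goodx in n. apply not_all_ex_not in n. destruct n as [p Hp]. apply imply_to_and in Hp. destruct Hp as [Hp Hb].
     eapply Rle_trans; [|apply (rsum_ge_term d (fun p => Jb q (x p)) p)]. unfold Jb. destruct excluded_middle_informative. contradiction. lra.
     intros. unfold Jb. destruct excluded_middle_informative; lra. auto.
 - rewrite rsum_comm. rewrite <- (Rmult_1_r (INR d)). rewrite <- rsum_const. apply rsum_le. intros p Hp.
   pose proof (rsum_atmost1 Qn (fun q => Jb q (x p)) 1) as A. eapply Rle_trans; [apply RRle_abs|]. apply A.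
   + intros. unfold Jb. destruct excluded_middle_informative; rewrite ?Rabs_R0, ?Rabs_R1; lra.
   + intros i j Hi Hj Ni Nj. unfold Jb in *. destruct excluded_middle_informative; [lra|]. destruct excluded_middle_informative; [lra|].
     apply (bad_unique i j (x p)); auto.
   + lra. Qed.

Hypothesis He0 : 0 <= e.
Hypothesis HC0 : 0 <= C.

Lemma stage_est : forall x, in_cube d x ->
  Rabs (r x - rsum Qn (fun q => H' q (Yp q x))) <= INR d / INR (S d) * B + 2 * e.
Proof. intros x Hx. assert (HSd : 0 < INR (S d)) by (apply lt_0_INR; lia).
 assert (Hq : forall q, (q < Qn)%nat -> Rabs (H' q (Yp q x) - (1 - Ib q x) * (r x / INR (S d))) <=
     ((1 - Ib q x) * e + Ib q x * B) / INR (S d)).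
 { intros q Hq. unfold Ib. destruct excluded_middle_informative.
   - replace ((1 - 0) * (r x / INR (S d))) with (r x / INR (S d)) by ring.
     replace (((1 - 0) * e + 0 * B) / INR (S d)) with (e / INR (S d)) by (field; lra). apply good_value; auto.
   - replace ((1 - 1) * (r x / INR (S d))) with 0 by ring. rewrite Rminus_0_r.
     replace (((1 - 1) * e + 1 * B) / INR (S d)) with (B / INR (S d)) by (field; lra). apply H'_bound. }
 set (nb := rsum Qn (fun q => Ib q x)).
 assert (Hnb : nb <= INR d) by apply nb_le.
 assert (Hnb0 : 0 <= nb). { apply rsum_nonneg. intros. unfold Ib. destruct excluded_middle_informative; lra. }
 assert (HQ : INR Qn = 2 * INR d + 1). { unfold Qn. rewrite plus_INR, mult_INR. simpl. ring. }
 assert (E1 : rsum Qn (fun q => (1 - Ib q x) * (r x / INR (S d))) = (INR Qn - nb) * (r x / INR (S d))).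
 { rewrite (rsum_ext _ _ (fun q => (r x / INR (S d)) * 1 - (r x / INR (S d)) * Ib q x)) by (intros; ring).
   rewrite rsum_minus, !rsum_scal, rsum_const. fold nb. ring. }
 assert (E2 : rsum Qn (fun q => ((1 - Ib q x) * e + Ib q x * B) / INR (S d)) = ((INR Qn - nb) * e + nb * B) / INR (S d)).
 { rewrite (rsum_ext _ _ (fun q => (e / INR (S d)) * 1 + ((B - e) / INR (S d)) * Ib q x)) by (intros; field; lra).
   rewrite rsum_plus, !rsum_scal, rsum_const. fold nb. field. lra. }
 replace (r x - rsum Qn (fun q => H' q (Yp q x))) with
   ((r x - rsum Qn (fun q => (1 - Ib q x) * (r x / INR (S d)))) -
    rsum Qn (fun q => H' q (Yp q x) - (1 - Ib q x) * (r x / INR (S d)))) by (rewrite rsum_minus; ring).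
 eapply Rle_trans. apply Rabs_triang. rewrite Rabs_Ropp.
 assert (A2 : Rabs (rsum Qn (fun q => H' q (Yp q x) - (1 - Ib q x) * (r x / INR (S d)))) <= ((INR Qn - nb) * e + nb * B) / INR (S d)).
 { rewrite <- E2. eapply Rle_trans. apply rsum_abs. apply rsum_le. auto. }
 rewrite E1. replace (r x - (INR Qn - nb) * (r x / INR (S d))) with (r x * ((nb - INR d) / INR (S d))) by (rewrite HQ, S_INR; field; lra).
 rewrite Rabs_mult. rewrite (Rabs_left1 ((nb - INR d) / INR (S d))).
 2:{ unfold Rdiv. assert (0 < / INR (S d)) by (apply Rinv_0_lt_compat; lra). nra. }
 pose proof (HB x Hx).
 assert (A1 : Rabs (r x) * - ((nb - INR d) / INR (S d)) <= B * ((INR d - nb) / INR (S d))).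
 { replace (- ((nb - INR d) / INR (S d))) with ((INR d - nb) / INR (S d)) by (field; lra).
   apply Rmult_le_compat_r; auto. apply Rdiv_le_0_compat; lra. }
 assert (A3 : B * ((INR d - nb) / INR (S d)) + ((INR Qn - nb) * e + nb * B) / INR (S d) =
   INR d / INR (S d) * B + (INR Qn - nb) / INR (S d) * e) by (field; lra).
 assert (A4 : (INR Qn - nb) / INR (S d) * e <= 2 * e).
 { apply Rmult_le_compat_r; auto. apply Rmult_le_reg_r with (INR (S d)); auto. unfold Rdiv. rewrite Rmult_assoc, Rinv_l by lra.
   rewrite HQ, S_INR. lra. }
 lra. Qed.

End Stage.


Lemma sumHY_diff : forall d Q (H : nat -> R -> R) LH (phi1 phi2 : nat -> nat -> R -> R) (x y : nat -> R) eta,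
  (forall q, Lip LH (H q)) -> 0 <= LH ->
  (forall p q, (p < d)%nat -> (q < Q)%nat -> Rabs (phi1 p q (x p) - phi2 p q (y p)) <= eta) ->
  Rabs (rsum Q (fun q => H q (rsum d (fun p => phi1 p q (x p)))) - rsum Q (fun q => H q (rsum d (fun p => phi2 p q (y p)))))
  <= INR Q * (LH * (INR d * eta)).
Proof. intros. rewrite <- rsum_minus. eapply Rle_trans. apply rsum_abs. rewrite <- rsum_const. apply rsum_le.
 intros q Hq. eapply Rle_trans. apply H0. apply Rmult_le_compat_l; auto.
 rewrite <- rsum_minus. eapply Rle_trans. apply rsum_abs. rewrite <- rsum_const. apply rsum_le. intros. apply H2; auto. Qed.

Theorem stage : forall d, (1 <= d)%nat -> forall phi L C, 0 <= L -> 0 <= C ->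
  (forall p q, (p < d)%nat -> (q < Qn d)%nat -> Lip L (phi p q) /\ forall t, 0 <= t <= 1 -> Rabs (phi p q t) <= C) ->
  forall r B, 0 <= B -> (forall x, in_cube d x -> Rabs (r x) <= B) -> UCc d r ->
  forall e, 0 < e -> forall tau, 0 < tau ->
  exists phi2 L2 C2 (Hn : nat -> R -> R) LH, 0 <= L2 /\ 0 <= C2 /\ 0 <= LH /\
    (forall p q, (p < d)%nat -> (q < Qn d)%nat -> Lip L2 (phi2 p q) /\ (forall t, 0 <= t <= 1 -> Rabs (phi2 p q t) <= C2) /\
       forall t, 0 <= t <= 1 -> Rabs (phi2 p q t - phi p q t) <= tau) /\
    (forall q, Lip LH (Hn q)) /\
    forall x, in_cube d x -> Rabs (r x - rsum (Qn d) (fun q => Hn q (rsum d (fun p => phi2 p q (x p))))) <= INR d / INR (S d) * B + 2 * e.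
Proof. intros d Hd phi L C HL HC Hphi r B HB0 HB Hr e He tau Htau.
 destruct (Hr e He) as [del [Hdel Hrd]].
 destruct (INR_archimed 1 (/ del + 4 * L / tau + 1) ltac:(lra)) as [N HNr].
 assert (Hdl : 0 < / del) by (apply Rinv_0_lt_compat; auto).
 assert (H4L : 0 <= 4 * L / tau) by (apply Rdiv_le_0_compat; lra).
 assert (HN : (1 <= N)%nat). { destruct N. simpl in HNr. exfalso; lra. lia. }
 assert (HNp : 0 < INR N) by (apply lt_0_INR; lia).
 assert (Hhh : hh N <= del). { unfold hh. rewrite <- (Rinv_inv del). apply Rinv_le_contravar; auto. lra. }
 assert (HhL : 2 * L * hh N <= tau / 2). { unfold hh. apply Rmult_le_reg_r with (INR N); auto.
   replace (2 * L * / INR N * INR N) with (2 * L) by (field; lra).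
   assert (4 * L / tau * tau = 4 * L) by (field; lra). assert (4 * L / tau <= INR N) by lra.
   assert (4 * L <= INR N * tau) by nra. lra. }
 pose proof (Kb_pos d Hd N HN) as HKb.
 set (Tt := tau / (4 * INR (Kb d N))).
 assert (HT : 0 < Tt) by (unfold Tt; apply Rdiv_lt_0_compat; lra).
 assert (HTK : 2 * Tt * INR (Kb d N) = tau / 2) by (unfold Tt; field; lra).
 exists (phi' d N Tt phi), (INR (S N) * (2 * Vm d N Tt C * / ww d N)), (Cp d N Tt L C), (H' d N Tt phi L C r B),
   (INR (S (2 * Zr d N Tt L C)) * (B / INR (S d) * (4 * Rabs (/ Tt)))).
 pose proof (ww_pos d Hd N HN) as [W1 W2].
 assert (HVm : 0 <= Vm d N Tt C) by (unfold Vm; nra).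
 split. apply Rmult_le_pos. apply pos_INR. apply Rmult_le_pos. lra. left; apply Rinv_0_lt_compat; auto.
 split. eapply Cp_nonneg; eauto.
 split. apply Rmult_le_pos. apply pos_INR. apply Rmult_le_pos. apply Rdiv_le_0_compat; auto. apply lt_0_INR; lia.
   assert (0 <= Rabs (/ Tt)) by apply Rabs_pos. lra.
 split. intros p q Hp Hq. split. apply (phi'_lip d Hd N HN Tt HT phi L C Hphi); auto.
   split. intros. apply (phi'_bound d Hd N HN Tt HT phi L C HL Hphi); auto.
   intros. eapply Rle_trans. apply (phi'_close d Hd N HN Tt HT phi L C HL Hphi); auto. lra.
 split. intros. apply (H'_lip d Hd N HN Tt HT phi L C r B HB0).
 intros x Hx. apply (stage_est d Hd N HN Tt HT phi L C HL Hphi r B e HB0 HB); auto; try lra.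
 intros. apply Hrd; auto. intros. specialize (H1 p H2). lra. Qed.

Definition Inv (d : nat) (f : (nat -> R) -> R) (B : R) : Prop :=
  exists phi (H : nat -> R -> R) L LH C, 0 <= L /\ 0 <= LH /\ 0 <= C /\
   (forall p q, (p < d)%nat -> (q < Qn d)%nat -> Lip L (phi p q) /\ forall t, 0 <= t <= 1 -> Rabs (phi p q t) <= C) /\
   (forall q, Lip LH (H q)) /\
   forall x, in_cube d x -> Rabs (f x - rsum (Qn d) (fun q => H q (rsum d (fun p => phi p q (x p))))) <= B.

Lemma Inv_mono : forall d f B B', Inv d f B -> B <= B' -> Inv d f B'.
Proof. intros d f B B' [phi [H [L [LH [C [A1 [A2 [A3 [A4 [A5 A6]]]]]]]]]] Hle.
 exists phi, H, L, LH, C. do 5 (split; auto). intros. eapply Rle_trans. apply A6; auto. auto. Qed.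

Lemma cube0 : forall d, in_cube d (fun _ => 0).
Proof. intros d p Hp. lra. Qed.

Lemma Inv_step : forall d f B, (1 <= d)%nat -> UCc d f -> Inv d f B -> forall e, 0 < e ->
  Inv d f (INR d / INR (S d) * B + 3 * e).
Proof. intros d f B Hd Hf [phi [H [L [LH [C [HL [HLH [HC [Hphi [HH Hb]]]]]]]]]] e He.
 set (r := fun x => f x - rsum (Qn d) (fun q => H q (rsum d (fun p => phi p q (x p))))).
 assert (HB0 : 0 <= B). { specialize (Hb _ (cube0 d)). pose proof (Rabs_pos (f (fun _ => 0) -
    rsum (Qn d) (fun q => H q (rsum d (fun p => phi p q 0))))). lra. }
 set (Lc := INR (Qn d) * (LH * (INR d * L))).
 assert (HLc : 0 <= Lc). { unfold Lc. apply Rmult_le_pos. apply pos_INR. apply Rmult_le_pos; auto. apply Rmult_le_pos; auto. apply pos_INR. }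
 assert (Hr : UCc d r).
 { intros e' He'. destruct (Hf (e'/2) ltac:(lra)) as [df [Hdf Hfd]].
   exists (Rmin df (e' / (2 * (Lc + 1)))). split. apply Rmin_glb_lt; auto. apply Rdiv_lt_0_compat; lra.
   intros x y Hx Hy Hxy. unfold r.
   replace (f x - rsum (Qn d) (fun q => H q (rsum d (fun p => phi p q (x p)))) -
      (f y - rsum (Qn d) (fun q => H q (rsum d (fun p => phi p q (y p))))))
    with ((f x - f y) - (rsum (Qn d) (fun q => H q (rsum d (fun p => phi p q (x p)))) -
      rsum (Qn d) (fun q => H q (rsum d (fun p => phi p q (y p)))))) by ring.
   eapply Rle_trans. apply Rabs_triang. rewrite Rabs_Ropp.
   assert (A1 : Rabs (f x - f y) <= e' / 2). { apply Hfd; auto. intros. specialize (Hxy p H0). pose proof (Rmin_l df (e' / (2 * (Lc + 1)))). lra. }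
   assert (A2 : Rabs (rsum (Qn d) (fun q => H q (rsum d (fun p => phi p q (x p)))) -
      rsum (Qn d) (fun q => H q (rsum d (fun p => phi p q (y p))))) <= INR (Qn d) * (LH * (INR d * (L * (e' / (2 * (Lc + 1))))))).
   { apply sumHY_diff; auto. intros. destruct (Hphi p q H0 H1) as [Lp _]. eapply Rle_trans. apply Lp.
     apply Rmult_le_compat_l; auto. specialize (Hxy p H0). pose proof (Rmin_r df (e' / (2 * (Lc + 1)))). lra. }
   assert (INR (Qn d) * (LH * (INR d * (L * (e' / (2 * (Lc + 1)))))) = Lc * (e' / (2 * (Lc + 1)))) by (unfold Lc; ring).
   assert (Lc * (e' / (2 * (Lc + 1))) <= e' / 2). { apply Rmult_le_reg_r with (2 * (Lc + 1)). lra.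
     replace (Lc * (e' / (2 * (Lc + 1))) * (2 * (Lc + 1))) with (Lc * e') by (field; lra). nra. }
   lra. }
 set (Ld := INR (Qn d) * (LH * INR d)).
 assert (HLd : 0 <= Ld). { unfold Ld. apply Rmult_le_pos. apply pos_INR. apply Rmult_le_pos; auto. apply pos_INR. }
 set (tau := e / (Ld + 1)).
 assert (Htau : 0 < tau) by (unfold tau; apply Rdiv_lt_0_compat; lra).
 destruct (stage d Hd phi L C HL HC Hphi r B HB0 Hb Hr e He tau Htau) as [phi2 [L2 [C2 [Hn [LH2 [P1 [P2 [P3 [P4 [P5 P6]]]]]]]]]].
 exists phi2, (fun q y => H q y + Hn q y), L2, (LH + LH2), C2. split; auto. split. lra. split; auto.
 split. intros p q Hp Hq. destruct (P4 p q Hp Hq) as [A [B1 _]]. split; auto.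
 split. intros q. apply Lip_plus; auto.
 intros x Hx. rewrite rsum_plus.
 replace (f x - (rsum (Qn d) (fun q => H q (rsum d (fun p => phi2 p q (x p)))) + rsum (Qn d) (fun q => Hn q (rsum d (fun p => phi2 p q (x p))))))
   with ((r x - rsum (Qn d) (fun q => Hn q (rsum d (fun p => phi2 p q (x p))))) +
     (rsum (Qn d) (fun q => H q (rsum d (fun p => phi p q (x p)))) - rsum (Qn d) (fun q => H q (rsum d (fun p => phi2 p q (x p)))))) by (unfold r; cbv beta; ring).
 eapply Rle_trans. apply Rabs_triang. specialize (P6 x Hx).
 assert (A2 : Rabs (rsum (Qn d) (fun q => H q (rsum d (fun p => phi p q (x p)))) - rsum (Qn d) (fun q => H q (rsum d (fun p => phi2 p q (x p)))))
   <= INR (Qn d) * (LH * (INR d * tau))).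
 { apply sumHY_diff; auto. intros. destruct (P4 p q H0 H1) as [_ [_ Cl]]. rewrite Rabs_minus_sym. apply Cl. apply Hx; auto. }
 assert (INR (Qn d) * (LH * (INR d * tau)) = Ld * tau) by (unfold Ld; ring).
 assert (Ld * tau <= e). { unfold tau. apply Rmult_le_reg_r with (Ld + 1). lra.
   replace (Ld * (e / (Ld + 1)) * (Ld + 1)) with (Ld * e) by (field; lra). nra. }
 lra. Qed.

Lemma Inv_iter : forall d f B0, (1 <= d)%nat -> UCc d f -> 0 <= B0 -> Inv d f B0 -> forall e, 0 < e ->
  forall n, Inv d f ((INR d / INR (S d)) ^ n * B0 + 3 * e * INR (S d)).
Proof. intros d f B0 Hd Hf HB0 HI e He. assert (HSd : 0 < INR (S d)) by (apply lt_0_INR; lia).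
 induction n.
 - apply Inv_mono with B0; auto. rewrite pow_O. assert (0 <= 3 * e * INR (S d)) by nra. lra.
 - pose proof (Inv_step d f _ Hd Hf IHn e He). apply Inv_mono with (1 := H).
   rewrite <- tech_pow_Rmult. set (th := (INR d / INR (S d)) ^ n). right. rewrite S_INR in *. field. lra. Qed.


Definition tdef : R * R * R := (0, 0, 1).
Definition tw (l : list (R*R*R)) m := fst (fst (nth m l tdef)).
Definition tc (l : list (R*R*R)) m := snd (fst (nth m l tdef)).
Definition ts (l : list (R*R*R)) m := snd (nth m l tdef).

Lemma gsum_rsum : forall l t, gsum l t = rsum (length l) (fun m => tw l m * K ((t - tc l m) / ts l m)).
Proof. induction l; intros. simpl. auto. simpl length. rewrite rsum_shift. simpl gsum. rewrite IHl.
 unfold tw, tc, ts. simpl nth. auto. Qed.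

Lemma gsum_pad : forall l G t, (length l <= G)%nat -> gsum l t = rsum G (fun m => tw l m * K ((t - tc l m) / ts l m)).
Proof. intros. rewrite gsum_rsum. symmetry. apply rsum_zero_tail; auto. intros.
 unfold tw. rewrite nth_overflow by lia. simpl. ring. Qed.

Lemma ts_pos : forall l m, Forall (fun p => 0 < snd p) l -> 0 < ts l m.
Proof. intros. unfold ts. destruct (lt_dec m (length l)).
 rewrite Forall_forall in H. apply H. apply nth_In; auto.
 rewrite nth_overflow by lia. simpl. lra. Qed.

Lemma nsum_ge : forall n F i, (i < n)%nat -> (F i <= nsum n F)%nat.
Proof. induction n; intros. lia. simpl. destruct (Nat.eq_dec i n). subst. lia.
 assert (F i <= nsum n F)%nat by (apply IHn; lia). lia. Qed.

Theorem mainTheorem2 :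
  forall (d : nat), (1 <= d)%nat ->
  forall (f : (nat -> R) -> R), cont_on_cube d f ->
  forall eps : R, 0 < eps ->
  exists (G G' : nat) (w c s : nat -> nat -> nat -> R) (w' c' s' : nat -> nat -> R),
    (1 <= G)%nat /\ (1 <= G')%nat /\
    (forall p q m, (p < d)%nat -> (q < 2 * d + 1)%nat -> (m < G)%nat -> 0 < s p q m) /\
    (forall q m, (q < 2 * d + 1)%nat -> (m < G')%nat -> 0 < s' q m) /\
    exists bound : R, bound < eps /\
      forall x : nat -> R, in_cube d x -> Rabs (f x - rbf_kan d G G' w c s w' c' s' x) <= bound.
Proof.
 intros d Hd f Hf eps Heps.
 pose proof (cont_UC d f Hf) as Hu. destruct (UC_bounded d f Hu) as [B0 [HB0 HBf]].
 assert (HI0 : Inv d f B0).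
 { exists (fun _ _ _ => 0), (fun _ _ => 0), 0, 0, 0. split. lra. split. lra. split. lra.
   split. intros. split. apply Lip_const. intros. rewrite Rabs_R0. lra.
   split. intros. apply Lip_const. intros x Hx. rewrite rsum_const, Rmult_0_r, Rminus_0_r. auto. }
 assert (HSd : 0 < INR (S d)) by (apply lt_0_INR; lia).
 set (e := eps / (24 * INR (S d))).
 assert (He : 0 < e) by (unfold e; apply Rdiv_lt_0_compat; lra).
 pose proof (Inv_iter d f B0 Hd Hu HB0 HI0 e He) as HIt.
 assert (Hth : Rabs (INR d / INR (S d)) < 1).
 { rewrite Rabs_right by (apply Rle_ge, Rdiv_le_0_compat; [apply pos_INR| auto]).
   apply Rmult_lt_reg_r with (INR (S d)); auto. unfold Rdiv. rewrite Rmult_assoc, Rinv_l by lra. rewrite S_INR. lra. }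
 destruct (pow_lt_1_zero _ Hth (eps / (8 * (B0 + 1))) ltac:(apply Rdiv_lt_0_compat; lra)) as [n Hn].
 specialize (Hn n (le_n n)). specialize (HIt n).
 assert (HI : Inv d f (eps / 4)).
 { apply Inv_mono with (1 := HIt). rewrite Rabs_right in Hn.
   2:{ apply Rle_ge, pow_le, Rdiv_le_0_compat; [apply pos_INR | auto]. }
   assert ((INR d / INR (S d)) ^ n * B0 <= eps / 8).
   { apply Rle_trans with (eps / (8 * (B0 + 1)) * B0). apply Rmult_le_compat_r; auto. lra.
     apply Rmult_le_reg_r with (8 * (B0 + 1)). lra. replace (eps / (8 * (B0 + 1)) * B0 * (8 * (B0 + 1))) with (eps * B0) by (field; lra). nra. }
   assert (3 * e * INR (S d) = eps / 8) by (unfold e; field; lra). lra. }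
 destruct HI as [phi [H [L [LH [C [HL [HLH [HC [Hphi [HH Hb]]]]]]]]]].
 set (Qd := INR (Qn d)). assert (HQd : 1 <= Qd) by (unfold Qd, Qn; apply (le_INR 1); lia).
 set (eta := Rmin 1 (eps / (4 * (Qd * LH * INR d + 1)))).
 assert (Hpos1 : 0 < eps / (4 * (Qd * LH * INR d + 1))).
 { apply Rdiv_lt_0_compat; auto. assert (0 <= Qd * LH * INR d) by (apply Rmult_le_pos; [nra|apply pos_INR]). lra. }
 assert (Heta : 0 < eta) by (unfold eta; apply Rmin_glb_lt; lra).
 assert (Heta1 : eta <= 1) by apply Rmin_l.
 assert (Heta2 : Qd * (LH * (INR d * eta)) <= eps / 4).
 { apply Rle_trans with (Qd * LH * INR d * (eps / (4 * (Qd * LH * INR d + 1)))).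
   assert (0 <= Qd * LH * INR d) by (apply Rmult_le_pos; [nra|apply pos_INR]).
   replace (Qd * (LH * (INR d * eta))) with (Qd * LH * INR d * eta) by ring. apply Rmult_le_compat_l; auto. apply Rmin_r.
   assert (0 <= Qd * LH * INR d) by (apply Rmult_le_pos; [nra|apply pos_INR]).
   apply Rmult_le_reg_r with (4 * (Qd * LH * INR d + 1)). lra.
   replace (Qd * LH * INR d * (eps / (4 * (Qd * LH * INR d + 1))) * (4 * (Qd * LH * INR d + 1))) with (Qd * LH * INR d * eps) by (field; lra).
   nra. }
 set (Rg := INR d * C + INR d).
 set (Pin := fun p q l => (p < d)%nat -> (q < Qn d)%nat -> Forall (fun tr => 0 < snd tr) l /\
     forall t, 0 <= t <= 1 -> Rabs (phi p q t - gsum l t) <= eta).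
 set (lp := fun p q => epsilon (inhabits nil) (Pin p q)).
 assert (Hlp : forall p q, Pin p q (lp p q)).
 { intros. unfold lp. apply epsilon_spec. destruct (lt_dec p d); destruct (lt_dec q (Qn d)).
   - destruct (Hphi p q l l0) as [Lp _]. destruct (gauss_approx (phi p q) L 0 1 Lp eta Heta) as [l1 [A B]].
     exists l1. intros _ _. auto.
   - exists nil. unfold Pin. intros; exfalso; lia.
   - exists nil. unfold Pin. intros; exfalso; lia.
   - exists nil. unfold Pin. intros; exfalso; lia. }
 set (Pout := fun q l => Forall (fun tr => 0 < snd tr) l /\ forall t, - Rg <= t <= Rg -> Rabs (H q t - gsum l t) <= eps / (4 * Qd)).
 set (hl := fun q => epsilon (inhabits nil) (Pout q)).
 assert (Hhl : forall q, Pout q (hl q)).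
 { intros. unfold hl. apply epsilon_spec. apply (gauss_approx (H q) LH (- Rg) Rg (HH q)). apply Rdiv_lt_0_compat; lra. }
 set (G := S (nsum d (fun p => nsum (Qn d) (fun q => length (lp p q))))).
 set (G' := S (nsum (Qn d) (fun q => length (hl q)))).
 assert (HG : forall p q, (p < d)%nat -> (q < Qn d)%nat -> (length (lp p q) <= G)%nat).
 { intros. unfold G. pose proof (nsum_ge (Qn d) (fun q => length (lp p q)) q H1).
   pose proof (nsum_ge d (fun p => nsum (Qn d) (fun q => length (lp p q))) p H0). simpl in *. lia. }
 assert (HG' : forall q, (q < Qn d)%nat -> (length (hl q) <= G')%nat).
 { intros. unfold G'. pose proof (nsum_ge (Qn d) (fun q => length (hl q)) q H0). simpl in *. lia. }
 exists G, G', (fun p q m => tw (lp p q) m), (fun p q m => tc (lp p q) m), (fun p q m => ts (lp p q) m),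
   (fun q m => tw (hl q) m), (fun q m => tc (hl q) m), (fun q m => ts (hl q) m).
 split. unfold G; lia. split. unfold G'; lia.
 split. intros. apply ts_pos. apply (Hlp p q); auto.
 split. intros. apply ts_pos. apply (Hhl q).
 exists (3 * eps / 4). split. lra.
 intros x Hx.
 set (Yt := fun q => rsum d (fun p => gsum (lp p q) (x p))).
 assert (Erk : rbf_kan d G G' (fun p q m => tw (lp p q) m) (fun p q m => tc (lp p q) m) (fun p q m => ts (lp p q) m)
   (fun q m => tw (hl q) m) (fun q m => tc (hl q) m) (fun q m => ts (hl q) m) x = rsum (Qn d) (fun q => gsum (hl q) (Yt q))).
 { unfold rbf_kan. apply rsum_ext. intros q Hq. rewrite (gsum_pad (hl q) G') by auto. apply rsum_ext. intros m Hm.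
   f_equal. f_equal. f_equal. f_equal. unfold inner, Yt. apply rsum_ext. intros p Hp. symmetry. apply gsum_pad. apply HG; auto. }
 rewrite Erk.
 assert (A1 := Hb x Hx).
 assert (A2 : Rabs (rsum (Qn d) (fun q => H q (rsum d (fun p => phi p q (x p)))) -
    rsum (Qn d) (fun q => H q (rsum d (fun p => (fun p q t => gsum (lp p q) t) p q (x p))))) <= INR (Qn d) * (LH * (INR d * eta))).
 { apply (sumHY_diff d (Qn d) H LH phi (fun p q t => gsum (lp p q) t) x x eta); auto. intros. destruct (Hlp p q H0 H1) as [_ B]. apply B. apply Hx; auto. }
 assert (A3 : Rabs (rsum (Qn d) (fun q => H q (Yt q)) - rsum (Qn d) (fun q => gsum (hl q) (Yt q))) <= eps / 4).
 { rewrite <- rsum_minus. eapply Rle_trans. apply rsum_abs.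
   apply Rle_trans with (rsum (Qn d) (fun _ => eps / (4 * Qd))).
   - apply rsum_le. intros q Hq. destruct (Hhl q) as [_ B]. apply B.
     assert (Rabs (Yt q) <= Rg).
     { unfold Yt, Rg. eapply Rle_trans. apply rsum_abs. rewrite <- (Rmult_1_r (INR d)) at 2.
       rewrite <- Rmult_plus_distr_l. rewrite <- rsum_const. apply rsum_le. intros p Hp.
       destruct (Hlp p q Hp Hq) as [_ B1]. specialize (B1 (x p) (Hx p Hp)). destruct (Hphi p q Hp Hq) as [_ B2].
       specialize (B2 (x p) (Hx p Hp)).
       replace (gsum (lp p q) (x p)) with (phi p q (x p) - (phi p q (x p) - gsum (lp p q) (x p))) by ring.
       assert (Hm : forall a b, Rabs (a - b) <= Rabs a + Rabs b) by (intros; unfold Rabs; repeat destruct Rcase_abs; lra).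
       eapply Rle_trans. apply Hm. lra. }
     unfold Rabs in H0; destruct Rcase_abs; lra.
   - rewrite rsum_const. fold Qd. right. field. lra. }
 fold Qd in A2.
 replace (f x - rsum (Qn d) (fun q => gsum (hl q) (Yt q))) with
   ((f x - rsum (Qn d) (fun q => H q (rsum d (fun p => phi p q (x p))))) +
    (rsum (Qn d) (fun q => H q (rsum d (fun p => phi p q (x p)))) - rsum (Qn d) (fun q => H q (Yt q))) +
    (rsum (Qn d) (fun q => H q (Yt q)) - rsum (Qn d) (fun q => gsum (hl q) (Yt q)))) by ring.
 eapply Rle_trans. apply Rabs_triang. eapply Rle_trans. apply Rplus_le_compat_r. apply Rabs_triang.
 unfold Yt. unfold Yt in A3. lra.
Qed.
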